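(* Let $A=(a_{ij})_{i,j\in I}$ be a generalized Cartan matrix and $U=(u_{ij})_{i,j\in I}$ a complex matrix satisfying: (0) $u_{jj}=0$ for all $j$; (1) $u_{ij}=u_{ji}=0$ if $a_{ij}=a_{ji}=0$; (2) $u_{ij}=-k\,u_{ji}$ if $(a_{ij},a_{ji})=(-k,-1)$ with $k\in\{1,2,3\}$. Let $\mathbb{C}(\alpha;f;\tau)$ be the field of rational functions in independent variables $\alpha_j,f_j,\tau_j$ ($j\in I$). For each $i\in I$ let $s_i$ be the $\mathbb{C}$-automorphism of $\mathbb{C}(\alpha;f;\tau)$ given by $$s_i(\alpha_j)=\alpha_j-a_{ij}\alpha_i,\quad s_i(f_j)=f_j+\frac{\alpha_i}{f_i}u_{ij},\quad s_i(\tau_j)=\tau_j\ (j\neq i),\quad s_i(\tau_i)=f_i\,\tau_i\prod_{k\in I}\tau_k^{-a_{ki}}=f_i\,\frac{\prod_{k\in I\setminus\{i\}}\tau_k^{|a_{ki}|}}{\tau_i}.$$ Then these automorphisms define a representation of the Coxeter group $W(A)$ on $\mathbb{C}(\alpha;f;\tau)$, i.e. $s_i^2=\mathrm{id}$ and $(s_is_j)^{m_{ij}}=\mathrm{id}$ for $i\neq j$ with $m_{ij}<\infty$.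
   Context: A generalized Cartan matrix $A=(a_{ij})_{i,j\in I}$ ($I$ finite) is an integer matrix with $a_{jj}=2$, $a_{ij}\le 0$ for $i\ne j$, and $a_{ij}=0\iff a_{ji}=0$. The Coxeter group $W(A)$ is generated by $s_i$ ($i\in I$) with relations $s_i^2=1$ and $(s_is_j)^{m_{ij}}=1$ for $i\neq j$, where $m_{ij}=2,3,4,6,\infty$ according as $a_{ij}a_{ji}=0,1,2,3,\ge4$ (no relation when $m_{ij}=\infty$). *)

(* Defs.v *)
From HB Require Import structures.
From mathcomp Require Import all_boot all_order all_algebra.
From mathcomp Require Import generic_quotient fraction.
From mathcomp Require Import mpoly.
From mathcomp Require Import complex.
From mathcomp Require Import Rstruct.

Set Implicit Arguments.
Unset Strict Implicit.
Unset Printing Implicit Defensive.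

Import Order.TTheory GRing.Theory Num.Theory.
Local Open Scope ring_scope.

Notation CC := (complex Rdefinitions.R).
Definition P (n : nat) := {mpoly CC[n + n + n]}.
Definition FF (n : nat) := {fraction (P n)}.

Notation tofrac := (@FracField.tofrac _).

Definition is_GCM (n : nat) (A : 'M[int]_n) : Prop :=
  (forall j, A j j = 2) /\
  (forall i j, i != j -> A i j <= 0) /\
  (forall i j, A i j = 0 <-> A j i = 0).

(* m_ij as a function of a_ij a_ji : 2,3,4,6 for 0,1,2,3, and infinity (None) otherwise. *)
Definition cox_m (a : int) : option nat :=
  if a == 0 then Some 2%N
  else if a == 1 then Some 3%N
  else if a == 2 then Some 4%N
  else if a == 3 then Some 6%N
  else None.

Definition valpha n (j : 'I_n) : 'I_(n + n + n) := lshift n (lshift n j).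
Definition vf     n (j : 'I_n) : 'I_(n + n + n) := lshift n (rshift n j).
Definition vtau   n (j : 'I_n) : 'I_(n + n + n) := rshift (n + n) j.

Definition Xalpha n (j : 'I_n) : FF n := tofrac ('X_(valpha j) : P n).
Definition Xf     n (j : 'I_n) : FF n := tofrac ('X_(vf j) : P n).
Definition Xtau   n (j : 'I_n) : FF n := tofrac ('X_(vtau j) : P n).

Definition cst n (c : CC) : FF n := tofrac (c%:MP : P n).

Definition s_img n (A : 'M[int]_n) (U : 'M[CC]_n) (i : 'I_n)
    (v : 'I_(n + n + n)) : FF n :=
  match split v with
  | inl w =>
      match split w with
      | inl j => Xalpha j - (A i j)%:~R * Xalpha i
      | inr j => Xf j + Xalpha i / Xf i * cst n (U i j)
      end
  | inr j =>
      if j == i then Xf i * Xtau i * \prod_(k < n) Xtau k ^ (- A k i)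
      else Xtau j
  end.

Definition s_poly n (A : 'M[int]_n) (U : 'M[CC]_n) (i : 'I_n) (p : P n) : FF n :=
  mmap (fun c : CC => cst n c) (s_img A U i) p.

Definition s_act n (A : 'M[int]_n) (U : 'M[CC]_n) (i : 'I_n) (x : FF n) : FF n :=
  let r := repr x in s_poly A U i (\n_r) / s_poly A U i (\d_r).

(* Main.v *)
Require Import Defs.
From HB Require Import structures.
From mathcomp Require Import all_boot all_order all_algebra.
From mathcomp Require Import generic_quotient fraction mpoly complex Rstruct.
From mathcomp Require Import ring lra zify.
From Stdlib Require Import FunctionalExtensionality.
Import GRing.Theory Num.Theory.
Local Open Scope ring_scope.
Set Implicit Arguments.
Unset Strict Implicit.

Section Gen.
Variable n : nat.
Local Notation FFn := (FF n).
Local Notation Pn := (P n).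

Definition cstr : {rmorphism CC -> FFn} := ((@FracField.tofrac Pn) \o (@mpolyC (n+n+n) CC)).
Definition phi (g : 'I_(n+n+n) -> FFn) (p : Pn) : FFn := mmap cstr g p.
Lemma phiD g : {morph phi g : x y / x + y}. Proof. exact: mmapD. Qed.
Lemma phiM g : {morph phi g : x y / x * y}. Proof. exact: rmorphM. Qed.
Lemma phi1 g : phi g 1 = 1. Proof. exact: rmorph1. Qed.
Lemma phiC g c : phi g c%:MP = cst n c. Proof. by rewrite /phi mmapC. Qed.
Lemma phiX g v : phi g 'X_v = g v.
Proof. by rewrite /phi mmapX mmap1U. Qed.
Lemma s_polyE (A : 'M[int]_n) U i p : s_poly A U i p = phi (s_img A U i) p.
Proof. by []. Qed.
End Gen.

Local Open Scope quotient_scope.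

Lemma frac_decomp (R : idomainType) (x : {fraction R}) :
  tofrac (\d_(repr x)) * x = tofrac (\n_(repr x)).
Proof.
rewrite -[x in _ * x]reprK.
set r := repr x.
unlock tofrac.
rewrite /= -[_ * _]/(FracField.mul _ _) -FracField.pi_mul /FracField.mulf.
apply/eqP; rewrite FracField.equivf_def.
rewrite !numden_Ratio ?mulr1 ?mul1r ?oner_neq0 ?denom_ratioP //.
Qed.

Lemma frac_eq (R : idomainType) (x : {fraction R}) :
  x = tofrac (\n_(repr x)) / tofrac (\d_(repr x)).
Proof.
have := frac_decomp x.
set d := tofrac (\d_(repr x)); set nn := tofrac _ => h.
have hd : d != 0 by rewrite tofrac_eq0 denom_ratioP.
by rewrite -h [d * x]mulrC mulfK.
Qed.

Lemma tofrac_inj (R : idomainType) : injective (@FracField.tofrac R).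
Proof. by move=> a b /eqP; rewrite tofrac_eq => /eqP. Qed.

Lemma fld1 (F : fieldType) (a b c d : F) : d * a = c * b -> b != 0 -> d != 0 -> c / d = a / b.
Proof. move=> e hb hd; have -> : c = d * a / b by rewrite e mulfK. by field; rewrite hb hd. Qed.

Section Ext.
Variable n : nat.
Local Notation FFn := (FF n).
Local Notation Pn := (P n).

Definition ext (g : 'I_(n+n+n) -> FFn) (x : FFn) : FFn :=
  phi g (\n_(repr x)) / phi g (\d_(repr x)).

Lemma s_actE (A : 'M[int]_n) U i x : s_act A U i x = ext (s_img A U i) x.
Proof. by []. Qed.

Variable g : 'I_(n+n+n) -> FFn.
Hypothesis inj : forall p, p != 0 -> phi g p != 0.

Lemma ext_frac a b : b != 0 -> ext g (tofrac a / tofrac b) = phi g a / phi g b.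
Proof.
move=> b0; rewrite /ext.
set x := tofrac a / tofrac b.
have := frac_decomp x; rewrite /x.
set nn := \n_(repr _); set d := \d_(repr _) => h.
have hb : tofrac b != 0 :> FFn by rewrite tofrac_eq0.
have hd : d != 0 by rewrite denom_ratioP.
have e : d * a = nn * b.
  apply: (@tofrac_inj (P n)); rewrite !rmorphM /= -h.
  by rewrite -mulrA divfK.
have pb := inj b0; have pd := inj hd.
have : phi g d * phi g a = phi g nn * phi g b by rewrite -!phiM e.
move=> e2.
exact: (@fld1 (FF n) (phi g a) (phi g b) (phi g nn) (phi g d) e2 pb pd).
Qed.

Lemma ext_tofrac a : ext g (tofrac a) = phi g a.
Proof.
by rewrite -[tofrac a]divr1 -(rmorph1 (@FracField.tofrac (P n))) ext_frac ?oner_neq0 // phi1 divr1.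
Qed.

Lemma frac_ex (x : FFn) : exists a b, b != 0 /\ x = tofrac a / tofrac b.
Proof. exists (\n_(repr x)), (\d_(repr x)); split; [exact: denom_ratioP | exact: frac_eq]. Qed.

Lemma tf0 (b : Pn) : b != 0 -> tofrac b != 0 :> FFn.
Proof. by rewrite tofrac_eq0. Qed.

Lemma ext_add x y : ext g (x + y) = ext g x + ext g y.
Proof.
have [a1 [b1 [h1 ->]]] := frac_ex x; have [a2 [b2 [h2 ->]]] := frac_ex y.
have h12 : b1 * b2 != 0 by rewrite mulf_neq0.
have -> : tofrac a1 / tofrac b1 + tofrac a2 / tofrac b2 =
  tofrac (a1 * b2 + a2 * b1) / tofrac (b1 * b2) :> FFn.
  by rewrite addf_div ?tf0 // !rmorphD !rmorphM.
rewrite !ext_frac // phiD !phiM addf_div ?inj //.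
Qed.

Lemma ext_mul x y : ext g (x * y) = ext g x * ext g y.
Proof.
have [a1 [b1 [h1 ->]]] := frac_ex x; have [a2 [b2 [h2 ->]]] := frac_ex y.
have h12 : b1 * b2 != 0 by rewrite mulf_neq0.
have -> : tofrac a1 / tofrac b1 * (tofrac a2 / tofrac b2) =
  tofrac (a1 * a2) / tofrac (b1 * b2) :> FFn.
  by rewrite mulf_div !rmorphM.
by rewrite !ext_frac // !phiM mulf_div.
Qed.

Lemma ext1 : ext g 1 = 1.
Proof. by rewrite -(rmorph1 (@FracField.tofrac (P n))) ext_tofrac phi1. Qed.

Lemma ext_cst c : ext g (cst n c) = cst n c.
Proof. by rewrite /cst ext_tofrac phiC. Qed.

Lemma ext_X v : ext g (tofrac 'X_v) = g v.
Proof. by rewrite ext_tofrac phiX. Qed.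
End Ext.

Lemma mpoly_closure (k : nat) (R : nzRingType) (Q : {mpoly R[k]} -> Prop) :
  (forall c, Q c%:MP) -> (forall i, Q 'X_i) ->
  (forall p q, Q p -> Q q -> Q (p + q)) -> (forall p q, Q p -> Q q -> Q (p * q)) ->
  forall p, Q p.
Proof.
move=> hC hX hD hM; elim/mpolyind => [|c m p _ _ hp].
  by rewrite -mpolyC0.
apply: (hD) => //; rewrite -mul_mpolyC; apply: (hM) => //.
rewrite mpolyXE_id; apply: (big_ind Q) => //; first by rewrite -mpolyC1.
move=> i _; move: (m i) => e; elim: e => [|e he]; first by rewrite expr0 -mpolyC1.
by rewrite exprS; apply: (hM).
Qed.

Section FMor.
Variable F : fieldType.
Variable s : F -> F.
Hypothesis sD : forall x y, s (x + y) = s x + s y.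
Hypothesis sM : forall x y, s (x * y) = s x * s y.
Hypothesis s1 : s 1 = 1.

Lemma fm0 : s 0 = 0.
Proof. by apply/(addIr (s 0)); rewrite -sD !add0r. Qed.
Lemma fmN x : s (- x) = - s x.
Proof. by apply/(addIr (s x)); rewrite -sD !addNr fm0. Qed.
Lemma fmB x y : s (x - y) = s x - s y.
Proof. by rewrite sD fmN. Qed.
Lemma fmn k : s k%:R = k%:R.
Proof. by elim: k => [|k ih]; rewrite ?fm0 // -addn1 !natrD sD ih s1. Qed.
Lemma fmz (z : int) : s z%:~R = z%:~R.
Proof. by case: z => k; rewrite ?NegzE ?rmorphN /= ?fmN fmn. Qed.
Lemma fmV x : s (x^-1) = (s x)^-1.
Proof.
have [->|x0] := eqVneq x 0; first by rewrite invr0 fm0 invr0.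
have h : s x * s x^-1 = 1 by rewrite -sM mulfV.
have sx0 : s x != 0 by apply/eqP => e; move: h; rewrite e mul0r => /eqP; rewrite eq_sym oner_eq0.
by apply: (mulfI sx0); rewrite h mulfV.
Qed.
Lemma fm_neq0 x : x != 0 -> s x != 0.
Proof.
move=> x0; apply/eqP => e.
have : s x * s x^-1 = 1 by rewrite -sM mulfV.
by rewrite e mul0r => /eqP; rewrite eq_sym oner_eq0.
Qed.
Lemma fmX x k : s (x ^+ k) = s x ^+ k.
Proof. by elim: k => [|k ih]; rewrite ?expr0 // !exprS sM ih. Qed.
Lemma fmXz x (z : int) : s (x ^ z) = s x ^ z.
Proof. by case: z => k; rewrite /exprz ?fmV fmX. Qed.
Lemma fm_prod (I : Type) (r : seq I) (P : pred I) (G : I -> F) :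
  s (\prod_(i <- r | P i) G i) = \prod_(i <- r | P i) s (G i).
Proof. exact: (big_morph s sM s1). Qed.
End FMor.

Section Gen2.
Variable n : nat.
Local Notation FFn := (FF n).
Local Notation Pn := (P n).

Definition fmor (s : FFn -> FFn) :=
  [/\ forall x y, s (x + y) = s x + s y, forall x y, s (x * y) = s x * s y,
      s 1 = 1 & forall c, s (cst n c) = cst n c].

Definition Xg (v : 'I_(n+n+n)) : FFn := tofrac 'X_v.

Lemma fmor_comp s1 s2 : fmor s1 -> fmor s2 -> fmor (s1 \o s2).
Proof.
case=> a1 m1 o1 c1 [a2 m2 o2 c2]; split=> /=.
- by move=> x y; rewrite a2 a1.
- by move=> x y; rewrite m2 m1.
- by rewrite o2 o1.
- by move=> c; rewrite c2 c1.
Qed.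

Lemma fmor_id : fmor id. Proof. by split. Qed.

Lemma fmor_iter s m : fmor s -> fmor (iter m s).
Proof.
move=> h; elim: m => [|m ih] /=; first exact: fmor_id.
exact: (fmor_comp h ih).
Qed.

Lemma fmor_tofrac s : fmor s -> forall p, s (tofrac p) = phi (fun v => s (Xg v)) p.
Proof.
case=> sD sM s1 sC; elim/mpoly_closure => [c|v|p q hp hq|p q hp hq].
- by rewrite phiC sC.
- by rewrite phiX.
- by rewrite rmorphD /= sD hp hq phiD.
- by rewrite rmorphM /= sM hp hq phiM.
Qed.

Lemma eq_phi (g1 g2 : 'I_(n+n+n) -> FFn) : g1 =1 g2 -> phi g1 =1 phi g2.
Proof.
move=> e p; rewrite /phi /mmap; apply: eq_bigr => m _; congr (_ * _).
exact: mmap1_eq.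
Qed.

Lemma phi_Xg p : phi Xg p = tofrac p.
Proof.
elim/mpoly_closure: p => [c|v|p q hp hq|p q hp hq].
- by rewrite phiC.
- by rewrite phiX.
- by rewrite phiD hp hq rmorphD.
- by rewrite phiM hp hq rmorphM.
Qed.

Lemma fmor_idE s : fmor s -> (forall v, s (Xg v) = Xg v) -> forall x, s x = x.
Proof.
move=> hs hX x; have [sD sM s1 sC] := hs.
have ht p : s (tofrac p) = tofrac p.
  by rewrite fmor_tofrac // (@eq_phi _ Xg) ?phi_Xg.
have [a [b [b0 ->]]] := frac_ex x.
by rewrite sM (fmV sD sM s1) !ht.
Qed.
End Gen2.

Lemma ringA (R : comRingType) (x1 x2 E y1 y2 : R) m1 m2 :
  x1 * E ^+ m1 = y1 -> x2 * E ^+ m2 = y2 ->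
  (x1 + x2) * E ^+ (m1 + m2) = y1 * E ^+ m2 + y2 * E ^+ m1.
Proof. by move=> <- <-; rewrite exprD; ring. Qed.
Lemma ringB (R : comRingType) (F1 F2 E t1 t2 : R) m1 m2 :
  F1 = E ^+ m1 * t1 -> F2 = E ^+ m2 * t2 ->
  F1 * E ^+ m2 + F2 * E ^+ m1 = E ^+ (m1 + m2) * (t1 + t2).
Proof. by move=> -> ->; rewrite exprD; ring. Qed.
Lemma ringC (R : comRingType) (x1 x2 E y1 y2 : R) m1 m2 :
  x1 * E ^+ m1 = y1 -> x2 * E ^+ m2 = y2 ->
  (x1 * x2) * E ^+ (m1 + m2) = y1 * y2.
Proof. by move=> <- <-; rewrite exprD; ring. Qed.
Lemma ringD (R : comRingType) (F1 F2 E t1 t2 : R) m1 m2 :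
  F1 = E ^+ m1 * t1 -> F2 = E ^+ m2 * t2 ->
  F1 * F2 = E ^+ (m1 + m2) * (t1 * t2).
Proof. by move=> -> ->; rewrite exprD; ring. Qed.

Lemma phiXn n (g : 'I_(n+n+n) -> FF n) (x : P n) k : phi g (x ^+ k) = phi g x ^+ k.
Proof. by elim: k => [|k ih]; rewrite ?expr0 ?phi1 // !exprS phiM ih. Qed.

Section Inj.
Variable n : nat.
Local Notation FFn := (FF n).
Local Notation Pn := (P n).
Variable g : 'I_(n+n+n) -> FFn.
Variable e : Pn.
Hypothesis he : phi g e != 0.
Hypothesis hv : forall v, exists m q, g v * tofrac e ^+ m = tofrac q /\ phi g q = phi g e ^+ m * Xg v.

Lemma cert_all p : exists m q, phi g p * tofrac e ^+ m = tofrac q /\ phi g q = phi g e ^+ m * tofrac p.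
Proof.
elim/mpoly_closure: p => [c|v|p1 p2 [m1 [q1 [h1 k1]]] [m2 [q2 [h2 k2]]]|p1 p2 [m1 [q1 [h1 k1]]] [m2 [q2 [h2 k2]]]].
- exists 0%N, c%:MP; rewrite expr0 mulr1 !phiC mul1r; split => //.
- by rewrite phiX; exact: hv.
- exists (m1 + m2)%N, (q1 * e ^+ m2 + q2 * e ^+ m1); split.
    by rewrite phiD rmorphD !rmorphM !rmorphXn /=; apply: ringA.
  by rewrite phiD !phiM !phiXn rmorphD /=; apply: ringB.
- exists (m1 + m2)%N, (q1 * q2); split.
    by rewrite phiM rmorphM /=; apply: ringC.
  by rewrite phiM rmorphM /=; apply: ringD.
Qed.

Lemma cert_inj p : p != 0 -> phi g p != 0.
Proof.
move=> p0; apply/eqP => hp.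
have [m [q [h1 h2]]] := cert_all p.
move: h1; rewrite hp mul0r => /esym /eqP; rewrite tofrac_eq0 => /eqP q0.
move: h2; rewrite q0 /phi mmap0 => /esym /eqP.
rewrite mulf_eq0 expf_eq0 (negbTE he) andbF /= tofrac_eq0.
by rewrite (negbTE p0).
Qed.
End Inj.

Definition gimg n (A : 'M[int]_n) (U : 'M[CC]_n) (i : 'I_n)
    (Y : 'I_(n + n + n) -> FF n) (v : 'I_(n + n + n)) : FF n :=
  match split v with
  | inl w =>
      match split w with
      | inl j => Y (valpha j) - (A i j)%:~R * Y (valpha i)
      | inr j => Y (vf j) + Y (valpha i) / Y (vf i) * cst n (U i j)
      end
  | inr j =>
      if j == i then Y (vf i) * Y (vtau i) * \prod_(k < n) Y (vtau k) ^ (- A k i)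
      else Y (vtau j)
  end.

Section S.
Variable n : nat.
Local Notation FFn := (FF n).
Local Notation Pn := (P n).
Variables (A : 'M[int]_n) (U : 'M[CC]_n).

Lemma s_img_gimg i v : s_img A U i v = gimg A U i (@Xg n) v.
Proof. by []. Qed.

Lemma split_a (j : 'I_n) : split (valpha j) = inl (lshift n j).
Proof. exact: (unsplitK (inl _)). Qed.
Lemma split_a2 (j : 'I_n) : split (lshift n j) = inl j :> ('I_n + 'I_n).
Proof. exact: (unsplitK (inl _)). Qed.
Lemma split_f (j : 'I_n) : split (vf j) = inl (rshift n j).
Proof. exact: (unsplitK (inl _)). Qed.
Lemma split_f2 (j : 'I_n) : split (rshift n j) = inr j :> ('I_n + 'I_n).
Proof. exact: (unsplitK (inr _)). Qed.
Lemma split_t (j : 'I_n) : split (vtau j) = inr j.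
Proof. exact: (unsplitK (inr _)). Qed.

Lemma gimg_a i Y j : gimg A U i Y (valpha j) = Y (valpha j) - (A i j)%:~R * Y (valpha i).
Proof. by rewrite /gimg split_a split_a2. Qed.
Lemma gimg_f i Y j : gimg A U i Y (vf j) = Y (vf j) + Y (valpha i) / Y (vf i) * cst n (U i j).
Proof. by rewrite /gimg split_f split_f2. Qed.
Lemma gimg_t i Y j : gimg A U i Y (vtau j) =
  if j == i then Y (vf i) * Y (vtau i) * \prod_(k < n) Y (vtau k) ^ (- A k i) else Y (vtau j).
Proof. by rewrite /gimg split_t. Qed.

Lemma var_ind (Q : 'I_(n+n+n) -> Prop) :
  (forall j, Q (valpha j)) -> (forall j, Q (vf j)) -> (forall j, Q (vtau j)) -> forall v, Q v.
Proof.
move=> ha hf ht v; rewrite -(splitK v); case: (split v) => [w|j] /=; last exact: ht.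
rewrite -(splitK w); case: (split w) => [j|j] /=; [exact: ha | exact: hf].
Qed.

Lemma gimg_mor s i Y v : fmor s -> s (gimg A U i Y v) = gimg A U i (s \o Y) v.
Proof.
case=> sD sM s1 sC; elim/var_ind: v => j.
- by rewrite !gimg_a (fmB sD) // sM (fmz sD s1).
- by rewrite !gimg_f sD !sM (fmV sD sM s1) sC.
- rewrite !gimg_t; case: ifP => // _.
  rewrite !sM (fm_prod sM s1) /=; congr (_ * _); apply: eq_bigr => k _.
  by rewrite (fmXz sD sM s1).
Qed.

Lemma Xg_neq0 v : Xg v != 0 :> FFn.
Proof.
rewrite /Xg tofrac_eq0; apply/eqP => h.
by have := (@mcoeffX _ CC (mnm1 v) (mnm1 v)); rewrite h mcoeff0 eqxx => /eqP; rewrite eq_sym oner_eq0.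
Qed.

Lemma cst0 : cst n 0 = 0.
Proof. by rewrite /cst mpolyC0 tofrac0. Qed.

Lemma prod_split (Y : 'I_n -> FFn) i :
  A i i = 2 -> (forall k, k != i -> A k i <= 0) ->
  \prod_(k < n) Y k ^ (- A k i) = (Y i ^+ 2)^-1 * \prod_(k < n | k != i) Y k ^+ `|A k i|%N.
Proof.
move=> hii hle; rewrite (bigD1 i) //= hii; congr (_ * _).
apply: eq_bigr => k hk; rewrite exprnP; congr (_ ^ _).
by rewrite -abszN gez0_abs // oppr_ge0 hle.
Qed.
End S.

Lemma gA (F : fieldType) (x y z two : F) : two = 2 -> (x - z * y) - z * (y - two * y) = x.
Proof. by move=> ->; ring. Qed.
Lemma gF1 (F : fieldType) (xfj xfi xa c t : F) : xfi != 0 ->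
  (xfj + xa / xfi * c) * (xfi * t) ^+ 1 = (xfj * xfi + xa * c) * t.
Proof. by move=> h; field. Qed.
Lemma gF2 (F : fieldType) (xfj xfi xa c T two : F) : xfi != 0 -> two = 2 ->
  ((xfj + xa / xfi * c) * xfi + (xa - two * xa) * c) * T = (xfi * T) ^+ 1 * xfj.
Proof. by move=> h ->; field. Qed.
Lemma gT1 (F : fieldType) (xf xt N : F) : xt != 0 ->
  (xf * xt * ((xt ^+ 2)^-1 * N)) * (xf * xt) ^+ 1 = xf ^+ 2 * N.
Proof. by move=> h; field. Qed.
Lemma gT2 (F : fieldType) (xf xt N : F) : xf != 0 -> xt != 0 ->
  xf ^+ 2 * N = (xf * (xf * xt * ((xt ^+ 2)^-1 * N))) ^+ 1 * xt.
Proof. by move=> h1 h2; field. Qed.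

Lemma phi_prod n (g : 'I_(n+n+n) -> FF n) (I : Type) (r : seq I) (Pr : pred I) (G : I -> P n) :
  phi g (\prod_(k <- r | Pr k) G k) = \prod_(k <- r | Pr k) phi g (G k).
Proof. exact: (big_morph (phi g) (phiM g) (phi1 g)). Qed.

Lemma phiN n (g : 'I_(n+n+n) -> FF n) (x : P n) : phi g (- x) = - phi g x.
Proof. by rewrite /phi mmapN. Qed.

Lemma phiz n (g : 'I_(n+n+n) -> FF n) (z : int) : phi g z%:~R = z%:~R.
Proof.
have hn k : phi g k%:R = k%:R by rewrite /phi mmapMn -/(phi g 1) phi1.
by case: z => k; rewrite ?NegzE ?rmorphN /= ?phiN hn.
Qed.

Section S.
Variable n : nat.
Local Notation FFn := (FF n).
Local Notation Pn := (P n).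
Variables (A : 'M[int]_n) (U : 'M[CC]_n).
Hypothesis hAii : forall i, A i i = 2.
Hypothesis hAle : forall i k, k != i -> A k i <= 0.
Hypothesis hUii : forall i, U i i = 0.
Variable i : 'I_n.

Local Notation g := (s_img A U i).
Local Notation X := (@Xg n).

Definition Nt (Y : 'I_(n+n+n) -> FFn) := \prod_(k < n | k != i) Y (vtau k) ^+ `|A k i|%N.

Lemma g_fi : g (vf i) = X (vf i).
Proof. by rewrite s_img_gimg gimg_f hUii cst0 mulr0 addr0. Qed.
Lemma g_ti : g (vtau i) = X (vf i) * X (vtau i) * ((X (vtau i) ^+ 2)^-1 * Nt X).
Proof. by rewrite s_img_gimg gimg_t eqxx (prod_split (fun k => X (vtau k)) (hAii i) (fun k => @hAle i k)). Qed.
Lemma g_tk k : k != i -> g (vtau k) = X (vtau k).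
Proof. by move=> h; rewrite s_img_gimg gimg_t (negbTE h). Qed.
Lemma Nt_neq0 : Nt X != 0.
Proof. by apply/prodf_neq0 => k _; rewrite expf_neq0 // Xg_neq0. Qed.

Lemma Aii2 : (A i i)%:~R = 2 :> FFn.
Proof. by rewrite hAii. Qed.

Definition e_i : Pn := 'X_(vf i) * 'X_(vtau i).

Lemma phi_e : phi g e_i = X (vf i) * g (vtau i).
Proof. by rewrite /e_i phiM !phiX g_fi. Qed.

Lemma phi_e_neq0 : phi g e_i != 0.
Proof.
rewrite phi_e g_ti !mulf_neq0 ?invr_neq0 ?expf_neq0 ?Xg_neq0 //; exact: Nt_neq0.
Qed.

Lemma cert_si v : exists m q, g v * tofrac e_i ^+ m = tofrac q /\ phi g q = phi g e_i ^+ m * X v.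
Proof.
elim/var_ind: v => j.
- exists 0%N, ('X_(valpha j) - (A i j)%:~R * 'X_(valpha i)); split.
    by rewrite expr0 mulr1 s_img_gimg gimg_a rmorphB rmorphM /= rmorph_int.
  rewrite expr0 mul1r phiD phiN phiM phiz !phiX !s_img_gimg !gimg_a.
  exact: (@gA (FF n) _ _ _ _ (Aii2)).
- exists 1%N, (('X_(vf j) * 'X_(vf i) + 'X_(valpha i) * (U i j)%:MP) * 'X_(vtau i)); split.
    rewrite s_img_gimg gimg_f /e_i !rmorphM !rmorphD !rmorphM /=.
    exact: (@gF1 (FF n) _ _ _ _ _ (Xg_neq0 _)).
  rewrite phi_e !phiM phiD !phiM !phiX phiC g_fi.
  rewrite !s_img_gimg gimg_f gimg_a -!s_img_gimg.
  exact: (@gF2 (FF n) _ _ _ _ _ _ (Xg_neq0 _) Aii2).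
- have [->|hj] := eqVneq j i.
    exists 1%N, ('X_(vf i) ^+ 2 * \prod_(k < n | k != i) 'X_(vtau k) ^+ `|A k i|%N); split.
      rewrite g_ti /e_i [RHS]rmorphM rmorphXn rmorph_prod rmorphM.
      rewrite [in RHS](eq_bigr (fun k => X (vtau k) ^+ `|A k i|%N)) => [|k _]; last by rewrite rmorphXn.
      exact: (@gT1 (FF n) _ _ _ (Xg_neq0 _)).
    rewrite phiM phiXn phi_prod phiX g_fi phi_e g_ti.
    rewrite (eq_bigr (fun k => X (vtau k) ^+ `|A k i|%N)) => [|k hk]; last by rewrite phiXn phiX g_tk.
    exact: (@gT2 (FF n) _ _ _ (Xg_neq0 _) (Xg_neq0 _)).
  exists 0%N, 'X_(vtau j); split.
    by rewrite expr0 mulr1 g_tk.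
  by rewrite expr0 mul1r phiX g_tk.
Qed.

Lemma inj_si p : p != 0 -> phi g p != 0.
Proof. exact: (cert_inj phi_e_neq0 cert_si). Qed.

Lemma fmor_si : fmor (s_act A U i).
Proof.
split => [x y|x y||c]; rewrite ?s_actE.
- exact: (ext_add inj_si).
- exact: (ext_mul inj_si).
- exact: (ext1 inj_si).
- exact: (ext_cst inj_si).
Qed.

Lemma s_act_X v : s_act A U i (X v) = gimg A U i X v.
Proof. by rewrite s_actE /Xg (ext_X inj_si). Qed.
End S.

Record st (F : Type) := mkst { sa1 : F; sa2 : F; sf1 : F; sf2 : F; st1 : F; st2 : F;
  sci : F; scj : F; sak : F; sfk : F }.

Definition nzs (F : fieldType) (s : st F) :=
  sf1 s != 0 /\ sf2 s != 0 /\ st1 s != 0 /\ st2 s != 0 /\ sci s != 0 /\ scj s != 0.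

Definition rhoi (F : fieldType) (aij cik uij uik : F) (bji : nat) (s : st F) : st F :=
  let: mkst a1 a2 f1 f2 t1 t2 ci cj ak fk := s in
  mkst (- a1) (a2 - aij * a1) f1 (f2 + a1 * uij / f1)
    (f1 * t1 * ((t1 ^+ 2)^-1 * (t2 ^+ bji * ci))) t2 ci cj (ak - cik * a1) (fk + a1 * uik / f1).

Definition rhoj (F : fieldType) (aji cjk uji ujk : F) (aij : nat) (s : st F) : st F :=
  let: mkst a1 a2 f1 f2 t1 t2 ci cj ak fk := s in
  mkst (a1 - aji * a2) (- a2) (f1 + a2 * uji / f2) f2 t1
    (f2 * t2 * ((t2 ^+ 2)^-1 * (t1 ^+ aij * cj))) ci cj (ak - cjk * a2) (fk + a2 * ujk / f2).

Ltac nzt := repeat (apply/andP; split); try done; try assumption.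


Lemma case_00 (F : fieldType) (p aij aji uij uji cik cjk uik ujk a1 a2 f1 f2 t1 t2 ci cj ak fk : F) (na nb : nat) :
  na = 0%N -> nb = 0%N ->
  aij = - 0%:R -> aji = - 0%:R -> uij = 0 -> uji = 0 ->
  let P := fun s => rhoj aji cjk uji ujk na (rhoi aij cik uij uik nb s) in
  let s0 := mkst a1 a2 f1 f2 t1 t2 ci cj ak fk in
  (forall N, (N < 2)%N -> nzs (iter N P s0) /\ nzs (rhoi aij cik uij uik nb (iter N P s0))) ->
  iter 2 P s0 = s0.
Proof.
move=> hna hnb haij haji huij huji; subst na nb aij aji uij uji => P s0 H.
have e0 : iter 0 P s0 = mkst (a1) (a2) (f1) (f2) (t1) (t2) ci cj (ak) (fk) by [].
have := H 0%N erefl; rewrite /nzs e0 /= => -[[n1 [n2 [n3 [n4 [n5 n6]]]]] _].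
have b1 := n1; have b2 := n2; have b3 := n3; have b4 := n4; have b5 := n5; have b6 := n6.
clear n1 n2 n3 n4 n5 n6.
have e1 : rhoi (- 0%:R) cik (0) uik 0 (iter 0 P s0) = mkst (- a1) (a2) (f1) (f2) (f1 * ci / (t1)) (t2) ci cj (ak - cik * (a1)) (fk + (a1) * uik / (f1)).
  rewrite e0 /rhoi /=; congr mkst; field; nzt.
have := H 0%N erefl; rewrite /nzs e1 /= => -[_ [n1 [n2 [n3 [n4 [n5 n6]]]]]].
clear n1 n2 n3 n4 n5 n6.
have e2 : iter 1 P s0 = mkst (- a1) (- a2) (f1) (f2) (f1 * ci / (t1)) (f2 * cj / (t2)) ci cj (ak - cik * (a1) - cjk * (a2)) (fk + (a1) * uik / (f1) + (a2) * ujk / (f2)).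
  rewrite iterS /P e1 /rhoj /=; congr mkst; field; nzt.
have := H 1%N erefl; rewrite /nzs e2 /= => -[[n1 [n2 [n3 [n4 [n5 n6]]]]] _].
clear n1 n2 n3 n4 n5 n6.
have e3 : rhoi (- 0%:R) cik (0) uik 0 (iter 1 P s0) = mkst (a1) (- a2) (f1) (f2) (t1) (f2 * cj / (t2)) ci cj (ak - cjk * (a2)) (fk + (a1) * uik / (f1) + (a2) * ujk / (f2) + (- a1) * uik / (f1)).
  rewrite e2 /rhoi /=; congr mkst; field; nzt.
have := H 1%N erefl; rewrite /nzs e3 /= => -[_ [n1 [n2 [n3 [n4 [n5 n6]]]]]].
clear n1 n2 n3 n4 n5 n6.
have e4 : iter 2 P s0 = mkst (a1) (a2) (f1) (f2) (t1) (t2) ci cj (ak) (fk + (a1) * uik / (f1) + (a2) * ujk / (f2) + (- a1) * uik / (f1) + (- a2) * ujk / (f2)).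
  rewrite iterS /P e3 /rhoj /=; congr mkst; field; nzt.
change (iter 2 P s0 = s0); rewrite e4 /s0; congr mkst; field; nzt.
Qed.

Lemma case_11 (F : fieldType) (p aij aji uij uji cik cjk uik ujk a1 a2 f1 f2 t1 t2 ci cj ak fk : F) (na nb : nat) :
  na = 1%N -> nb = 1%N ->
  aij = - 1%:R -> aji = - 1%:R -> uij = - 1%:R * p -> uji = p ->
  let P := fun s => rhoj aji cjk uji ujk na (rhoi aij cik uij uik nb s) in
  let s0 := mkst a1 a2 f1 f2 t1 t2 ci cj ak fk in
  (forall N, (N < 3)%N -> nzs (iter N P s0) /\ nzs (rhoi aij cik uij uik nb (iter N P s0))) ->
  iter 3 P s0 = s0.
Proof.
move=> hna hnb haij haji huij huji; subst na nb aij aji uij uji => P s0 H.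
have e0 : iter 0 P s0 = mkst (a1) (a2) (f1) (f2) (t1) (t2) ci cj (ak) (fk) by [].
have := H 0%N erefl; rewrite /nzs e0 /= => -[[n1 [n2 [n3 [n4 [n5 n6]]]]] _].
have b1 := n1; have b2 := n2; have b3 := n3; have b4 := n4; have b5 := n5; have b6 := n6.
clear n1 n2 n3 n4 n5 n6.
have e1 : rhoi (- 1%:R) cik (- 1%:R * p) uik 1 (iter 0 P s0) = mkst (- a1) (a1 + a2) (f1) ((f1 * f2 + p * (- a1)) / (f1)) (f1 * t2 * ci / (t1)) (t2) ci cj (ak - cik * (a1)) (fk + (a1) * uik / (f1)).
  rewrite e0 /rhoi /=; congr mkst; field; nzt.
have := H 0%N erefl; rewrite /nzs e1 /= => -[_ [n1 [n2 [n3 [n4 [n5 n6]]]]]].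
have hQ_49_50 : (f1 * f2 + p * (- a1)) != 0.
  have -> : (f1 * f2 + p * (- a1)) = (f1) * ((f1 * f2 + p * (- a1)) / (f1)) by (field; nzt).
  by rewrite mulf_neq0.
clear n1 n2 n3 n4 n5 n6.
have e2 : iter 1 P s0 = mkst (a2) (- a1 - a2) (f1 * (f1 * f2 + p * (a2)) / ((f1 * f2 + p * (- a1)))) ((f1 * f2 + p * (- a1)) / (f1)) (f1 * t2 * ci / (t1)) (ci * cj * (f1 * f2 + p * (- a1)) / (t1)) ci cj (ak - cik * (a1) - cjk * (a1 + a2)) (fk + (a1) * uik / (f1) + (a1 + a2) * ujk / ((f1 * f2 + p * (- a1)) / (f1))).
  rewrite iterS /P e1 /rhoj /=; congr mkst; field; nzt.
have := H 1%N erefl; rewrite /nzs e2 /= => -[[n1 [n2 [n3 [n4 [n5 n6]]]]] _].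
have hQ_50_51 : (f1 * f2 + p * (a2)) != 0.
  have -> : (f1 * f2 + p * (a2)) = (f1 * (f1 * f2 + p * (a2)) / ((f1 * f2 + p * (- a1)))) * ((f1 * f2 + p * (- a1)) / (f1)) by (field; nzt).
  by rewrite mulf_neq0.
clear n1 n2 n3 n4 n5 n6.
have e3 : rhoi (- 1%:R) cik (- 1%:R * p) uik 1 (iter 1 P s0) = mkst (- a2) (- a1) (f1 * (f1 * f2 + p * (a2)) / ((f1 * f2 + p * (- a1)))) (f2 * (f1 * f2 + p * (- a1)) / ((f1 * f2 + p * (a2)))) (ci * cj * (f1 * f2 + p * (a2)) / (t2)) (ci * cj * (f1 * f2 + p * (- a1)) / (t1)) ci cj (ak - cik * (a1 + a2) - cjk * (a1 + a2)) (fk + (a1) * uik / (f1) + (a1 + a2) * ujk / ((f1 * f2 + p * (- a1)) / (f1)) + (a2) * uik / (f1 * (f1 * f2 + p * (a2)) / ((f1 * f2 + p * (- a1))))).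
  rewrite e2 /rhoi /=; congr mkst; field; nzt.
have := H 1%N erefl; rewrite /nzs e3 /= => -[_ [n1 [n2 [n3 [n4 [n5 n6]]]]]].
clear n1 n2 n3 n4 n5 n6.
have e4 : iter 2 P s0 = mkst (- a1 - a2) (a1) ((f1 * f2 + p * (a2)) / (f2)) (f2 * (f1 * f2 + p * (- a1)) / ((f1 * f2 + p * (a2)))) (ci * cj * (f1 * f2 + p * (a2)) / (t2)) (f2 * t1 * cj / (t2)) ci cj (ak - cik * (a1 + a2) - cjk * (a2)) (fk + (a1) * uik / (f1) + (a1 + a2) * ujk / ((f1 * f2 + p * (- a1)) / (f1)) + (a2) * uik / (f1 * (f1 * f2 + p * (a2)) / ((f1 * f2 + p * (- a1)))) + (- a1) * ujk / (f2 * (f1 * f2 + p * (- a1)) / ((f1 * f2 + p * (a2))))).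
  rewrite iterS /P e3 /rhoj /=; congr mkst; field; nzt.
have := H 2%N erefl; rewrite /nzs e4 /= => -[[n1 [n2 [n3 [n4 [n5 n6]]]]] _].
clear n1 n2 n3 n4 n5 n6.
have e5 : rhoi (- 1%:R) cik (- 1%:R * p) uik 1 (iter 2 P s0) = mkst (a1 + a2) (- a2) ((f1 * f2 + p * (a2)) / (f2)) (f2) (t1) (f2 * t1 * cj / (t2)) ci cj (ak - cjk * (a2)) (fk + (a1) * uik / (f1) + (a1 + a2) * ujk / ((f1 * f2 + p * (- a1)) / (f1)) + (a2) * uik / (f1 * (f1 * f2 + p * (a2)) / ((f1 * f2 + p * (- a1)))) + (- a1) * ujk / (f2 * (f1 * f2 + p * (- a1)) / ((f1 * f2 + p * (a2)))) + (- a1 - a2) * uik / ((f1 * f2 + p * (a2)) / (f2))).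
  rewrite e4 /rhoi /=; congr mkst; field; nzt.
have := H 2%N erefl; rewrite /nzs e5 /= => -[_ [n1 [n2 [n3 [n4 [n5 n6]]]]]].
clear n1 n2 n3 n4 n5 n6.
have e6 : iter 3 P s0 = mkst (a1) (a2) (f1) (f2) (t1) (t2) ci cj (ak) (fk + (a1) * uik / (f1) + (a1 + a2) * ujk / ((f1 * f2 + p * (- a1)) / (f1)) + (a2) * uik / (f1 * (f1 * f2 + p * (a2)) / ((f1 * f2 + p * (- a1)))) + (- a1) * ujk / (f2 * (f1 * f2 + p * (- a1)) / ((f1 * f2 + p * (a2)))) + (- a1 - a2) * uik / ((f1 * f2 + p * (a2)) / (f2)) + (- a2) * ujk / (f2)).
  rewrite iterS /P e5 /rhoj /=; congr mkst; field; nzt.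
change (iter 3 P s0 = s0); rewrite e6 /s0; congr mkst; field; nzt.
Qed.

Lemma case_21 (F : fieldType) (p aij aji uij uji cik cjk uik ujk a1 a2 f1 f2 t1 t2 ci cj ak fk : F) (na nb : nat) :
  na = 2%N -> nb = 1%N ->
  aij = - 2%:R -> aji = - 1%:R -> uij = - 2%:R * p -> uji = p ->
  let P := fun s => rhoj aji cjk uji ujk na (rhoi aij cik uij uik nb s) in
  let s0 := mkst a1 a2 f1 f2 t1 t2 ci cj ak fk in
  (forall N, (N < 4)%N -> nzs (iter N P s0) /\ nzs (rhoi aij cik uij uik nb (iter N P s0))) ->
  iter 4 P s0 = s0.
Proof.
move=> hna hnb haij haji huij huji; subst na nb aij aji uij uji => P s0 H.
have e0 : iter 0 P s0 = mkst (a1) (a2) (f1) (f2) (t1) (t2) ci cj (ak) (fk) by [].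
have := H 0%N erefl; rewrite /nzs e0 /= => -[[n1 [n2 [n3 [n4 [n5 n6]]]]] _].
have b1 := n1; have b2 := n2; have b3 := n3; have b4 := n4; have b5 := n5; have b6 := n6.
clear n1 n2 n3 n4 n5 n6.
have e1 : rhoi (- 2%:R) cik (- 2%:R * p) uik 1 (iter 0 P s0) = mkst (- a1) (2%:R * a1 + a2) (f1) ((f1 * f2 + p * (- 2%:R * a1)) / (f1)) (f1 * t2 * ci / (t1)) (t2) ci cj (ak - cik * (a1)) (fk + (a1) * uik / (f1)).
  rewrite e0 /rhoi /=; congr mkst; field; nzt.
have := H 0%N erefl; rewrite /nzs e1 /= => -[_ [n1 [n2 [n3 [n4 [n5 n6]]]]]].
have hQ_48_50 : (f1 * f2 + p * (- 2%:R * a1)) != 0.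
  have -> : (f1 * f2 + p * (- 2%:R * a1)) = (f1) * ((f1 * f2 + p * (- 2%:R * a1)) / (f1)) by (field; nzt).
  by rewrite mulf_neq0.
clear n1 n2 n3 n4 n5 n6.
have e2 : iter 1 P s0 = mkst (a1 + a2) (- 2%:R * a1 - a2) (f1 * (f1 * f2 + p * (a2)) / ((f1 * f2 + p * (- 2%:R * a1)))) ((f1 * f2 + p * (- 2%:R * a1)) / (f1)) (f1 * t2 * ci / (t1)) (f1 * t2 * ci ^+ 2 * cj * (f1 * f2 + p * (- 2%:R * a1)) / (t1 ^+ 2)) ci cj (ak - cik * (a1) - cjk * (2%:R * a1 + a2)) (fk + (a1) * uik / (f1) + (2%:R * a1 + a2) * ujk / ((f1 * f2 + p * (- 2%:R * a1)) / (f1))).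
  rewrite iterS /P e1 /rhoj /=; congr mkst; field; nzt.
have := H 1%N erefl; rewrite /nzs e2 /= => -[[n1 [n2 [n3 [n4 [n5 n6]]]]] _].
have hQ_50_51 : (f1 * f2 + p * (a2)) != 0.
  have -> : (f1 * f2 + p * (a2)) = (f1 * (f1 * f2 + p * (a2)) / ((f1 * f2 + p * (- 2%:R * a1)))) * ((f1 * f2 + p * (- 2%:R * a1)) / (f1)) by (field; nzt).
  by rewrite mulf_neq0.
clear n1 n2 n3 n4 n5 n6.
have e3 : rhoi (- 2%:R) cik (- 2%:R * p) uik 1 (iter 1 P s0) = mkst (- a1 - a2) (a2) (f1 * (f1 * f2 + p * (a2)) / ((f1 * f2 + p * (- 2%:R * a1)))) ((f1 * f2 + p * (- 2%:R * a1 - a2)) * (f1 * f2 + p * (- 2%:R * a1)) / (f1 * (f1 * f2 + p * (a2)))) (f1 * ci ^+ 2 * cj * (f1 * f2 + p * (a2)) / (t1)) (f1 * t2 * ci ^+ 2 * cj * (f1 * f2 + p * (- 2%:R * a1)) / (t1 ^+ 2)) ci cj (ak - cik * (2%:R * a1 + a2) - cjk * (2%:R * a1 + a2)) (fk + (a1) * uik / (f1) + (2%:R * a1 + a2) * ujk / ((f1 * f2 + p * (- 2%:R * a1)) / (f1)) + (a1 + a2) * uik / (f1 * (f1 * f2 + p * (a2)) / ((f1 * f2 + p * (- 2%:R * a1))))).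
  rewrite e2 /rhoi /=; congr mkst; field; nzt.
have := H 1%N erefl; rewrite /nzs e3 /= => -[_ [n1 [n2 [n3 [n4 [n5 n6]]]]]].
have hQ_48_49 : (f1 * f2 + p * (- 2%:R * a1 - a2)) != 0.
  have -> : (f1 * f2 + p * (- 2%:R * a1 - a2)) = (f1 * (f1 * f2 + p * (a2)) / ((f1 * f2 + p * (- 2%:R * a1)))) * ((f1 * f2 + p * (- 2%:R * a1 - a2)) * (f1 * f2 + p * (- 2%:R * a1)) / (f1 * (f1 * f2 + p * (a2)))) by (field; nzt).
  by rewrite mulf_neq0.
clear n1 n2 n3 n4 n5 n6.
have e4 : iter 2 P s0 = mkst (- a1) (- a2) (f1 * (f1 * f2 + p * (a2)) / ((f1 * f2 + p * (- 2%:R * a1 - a2)))) ((f1 * f2 + p * (- 2%:R * a1 - a2)) * (f1 * f2 + p * (- 2%:R * a1)) / (f1 * (f1 * f2 + p * (a2)))) (f1 * ci ^+ 2 * cj * (f1 * f2 + p * (a2)) / (t1)) (ci ^+ 2 * cj ^+ 2 * (f1 * f2 + p * (- 2%:R * a1 - a2)) * (f1 * f2 + p * (a2)) / (t2)) ci cj (ak - cik * (2%:R * a1 + a2) - cjk * (2%:R * a1 + 2%:R * a2)) (fk + (a1) * uik / (f1) + (2%:R * a1 + a2) * ujk / ((f1 * f2 + p * (- 2%:R * a1)) / (f1)) + (a1 + a2) * uik / (f1 * (f1 * f2 + p * (a2)) / ((f1 * f2 + p * (- 2%:R * a1)))) + (a2) * ujk / ((f1 * f2 + p * (- 2%:R *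 a1 - a2)) * (f1 * f2 + p * (- 2%:R * a1)) / (f1 * (f1 * f2 + p * (a2))))).
  rewrite iterS /P e3 /rhoj /=; congr mkst; field; nzt.
have := H 2%N erefl; rewrite /nzs e4 /= => -[[n1 [n2 [n3 [n4 [n5 n6]]]]] _].
clear n1 n2 n3 n4 n5 n6.
have e5 : rhoi (- 2%:R) cik (- 2%:R * p) uik 1 (iter 2 P s0) = mkst (a1) (- 2%:R * a1 - a2) (f1 * (f1 * f2 + p * (a2)) / ((f1 * f2 + p * (- 2%:R * a1 - a2)))) (f2 * (f1 * f2 + p * (- 2%:R * a1 - a2)) / ((f1 * f2 + p * (a2)))) (t1 * ci * cj * (f1 * f2 + p * (a2)) / (t2)) (ci ^+ 2 * cj ^+ 2 * (f1 * f2 + p * (- 2%:R * a1 - a2)) * (f1 * f2 + p * (a2)) / (t2)) ci cj (ak - cik * (a1 + a2) - cjk * (2%:R * a1 + 2%:R * a2)) (fk + (a1) * uik / (f1) + (2%:R * a1 + a2) * ujk / ((f1 * f2 + p * (- 2%:R * a1)) / (f1)) + (a1 + a2) * uik / (f1 * (f1 * f2 + p * (a2)) / ((f1 * f2 + p * (- 2%:R * a1)))) + (a2) * ujk / ((f1 * f2 + p * (- 2%:R * a1 - a2)) * (f1 * f2 + p * (- 2%:R * a1)) / (f1 * (f1 * f2 + p * (a2)))) + (- a1) * uik / (f1 * (f1 * f2 + p * (a2)) / ((f1 * f2 + p * (- 2%:R * a1 - a2))))).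
  rewrite e4 /rhoi /=; congr mkst; field; nzt.
have := H 2%N erefl; rewrite /nzs e5 /= => -[_ [n1 [n2 [n3 [n4 [n5 n6]]]]]].
clear n1 n2 n3 n4 n5 n6.
have e6 : iter 3 P s0 = mkst (- a1 - a2) (2%:R * a1 + a2) ((f1 * f2 + p * (a2)) / (f2)) (f2 * (f1 * f2 + p * (- 2%:R * a1 - a2)) / ((f1 * f2 + p * (a2)))) (t1 * ci * cj * (f1 * f2 + p * (a2)) / (t2)) (f2 * t1 ^+ 2 * cj / (t2)) ci cj (ak - cik * (a1 + a2) - cjk * (a2)) (fk + (a1) * uik / (f1) + (2%:R * a1 + a2) * ujk / ((f1 * f2 + p * (- 2%:R * a1)) / (f1)) + (a1 + a2) * uik / (f1 * (f1 * f2 + p * (a2)) / ((f1 * f2 + p * (- 2%:R * a1)))) + (a2) * ujk / ((f1 * f2 + p * (- 2%:R * a1 - a2)) * (f1 * f2 + p * (- 2%:R * a1)) / (f1 * (f1 * f2 + p * (a2)))) + (- a1) * uik / (f1 * (f1 * f2 + p * (a2)) / ((f1 * f2 + p * (- 2%:R * a1 - a2)))) + (- 2%:R * a1 - a2) * ujk / (f2 * (f1 * f2 + p * (- 2%:R * a1 - a2)) / ((f1 * f2 + p * (a2))))).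
  rewrite iterS /P e5 /rhoj /=; congr mkst; field; nzt.
have := H 3%N erefl; rewrite /nzs e6 /= => -[[n1 [n2 [n3 [n4 [n5 n6]]]]] _].
clear n1 n2 n3 n4 n5 n6.
have e7 : rhoi (- 2%:R) cik (- 2%:R * p) uik 1 (iter 3 P s0) = mkst (a1 + a2) (- a2) ((f1 * f2 + p * (a2)) / (f2)) (f2) (t1) (f2 * t1 ^+ 2 * cj / (t2)) ci cj (ak - cjk * (a2)) (fk + (a1) * uik / (f1) + (2%:R * a1 + a2) * ujk / ((f1 * f2 + p * (- 2%:R * a1)) / (f1)) + (a1 + a2) * uik / (f1 * (f1 * f2 + p * (a2)) / ((f1 * f2 + p * (- 2%:R * a1)))) + (a2) * ujk / ((f1 * f2 + p * (- 2%:R * a1 - a2)) * (f1 * f2 + p * (- 2%:R * a1)) / (f1 * (f1 * f2 + p * (a2)))) + (- a1) * uik / (f1 * (f1 * f2 + p * (a2)) / ((f1 * f2 + p * (- 2%:R * a1 - a2)))) + (- 2%:R * a1 - a2) * ujk / (f2 * (f1 * f2 + p * (- 2%:R * a1 - a2)) / ((f1 * f2 + p * (a2)))) + (- a1 - a2) * uik / ((f1 * f2 + p * (a2)) / (f2))).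
  rewrite e6 /rhoi /=; congr mkst; field; nzt.
have := H 3%N erefl; rewrite /nzs e7 /= => -[_ [n1 [n2 [n3 [n4 [n5 n6]]]]]].
clear n1 n2 n3 n4 n5 n6.
have e8 : iter 4 P s0 = mkst (a1) (a2) (f1) (f2) (t1) (t2) ci cj (ak) (fk + (a1) * uik / (f1) + (2%:R * a1 + a2) * ujk / ((f1 * f2 + p * (- 2%:R * a1)) / (f1)) + (a1 + a2) * uik / (f1 * (f1 * f2 + p * (a2)) / ((f1 * f2 + p * (- 2%:R * a1)))) + (a2) * ujk / ((f1 * f2 + p * (- 2%:R * a1 - a2)) * (f1 * f2 + p * (- 2%:R * a1)) / (f1 * (f1 * f2 + p * (a2)))) + (- a1) * uik / (f1 * (f1 * f2 + p * (a2)) / ((f1 * f2 + p * (- 2%:R * a1 - a2)))) + (- 2%:R * a1 - a2) * ujk / (f2 * (f1 * f2 + p * (- 2%:R * a1 - a2)) / ((f1 * f2 + p * (a2)))) + (- a1 - a2) * uik / ((f1 * f2 + p * (a2)) / (f2)) + (- a2) * ujk / (f2)).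
  rewrite iterS /P e7 /rhoj /=; congr mkst; field; nzt.
change (iter 4 P s0 = s0); rewrite e8 /s0; congr mkst; field; nzt.
Qed.

Lemma case_31 (F : fieldType) (p aij aji uij uji cik cjk uik ujk a1 a2 f1 f2 t1 t2 ci cj ak fk : F) (na nb : nat) :
  na = 3%N -> nb = 1%N ->
  aij = - 3%:R -> aji = - 1%:R -> uij = - 3%:R * p -> uji = p ->
  let P := fun s => rhoj aji cjk uji ujk na (rhoi aij cik uij uik nb s) in
  let s0 := mkst a1 a2 f1 f2 t1 t2 ci cj ak fk in
  (forall N, (N < 6)%N -> nzs (iter N P s0) /\ nzs (rhoi aij cik uij uik nb (iter N P s0))) ->
  iter 6 P s0 = s0.
Proof.
move=> hna hnb haij haji huij huji; subst na nb aij aji uij uji => P s0 H.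
have e0 : iter 0 P s0 = mkst (a1) (a2) (f1) (f2) (t1) (t2) ci cj (ak) (fk) by [].
have := H 0%N erefl; rewrite /nzs e0 /= => -[[n1 [n2 [n3 [n4 [n5 n6]]]]] _].
have b1 := n1; have b2 := n2; have b3 := n3; have b4 := n4; have b5 := n5; have b6 := n6.
clear n1 n2 n3 n4 n5 n6.
have e1 : rhoi (- 3%:R) cik (- 3%:R * p) uik 1 (iter 0 P s0) = mkst (- a1) (3%:R * a1 + a2) (f1) ((f1 * f2 + p * (- 3%:R * a1)) / (f1)) (f1 * t2 * ci / (t1)) (t2) ci cj (ak - cik * (a1)) (fk + (a1) * uik / (f1)).
  rewrite e0 /rhoi /=; congr mkst; field; nzt.
have := H 0%N erefl; rewrite /nzs e1 /= => -[_ [n1 [n2 [n3 [n4 [n5 n6]]]]]].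
have hQ_47_50 : (f1 * f2 + p * (- 3%:R * a1)) != 0.
  have -> : (f1 * f2 + p * (- 3%:R * a1)) = (f1) * ((f1 * f2 + p * (- 3%:R * a1)) / (f1)) by (field; nzt).
  by rewrite mulf_neq0.
clear n1 n2 n3 n4 n5 n6.
have e2 : iter 1 P s0 = mkst (2%:R * a1 + a2) (- 3%:R * a1 - a2) (f1 * (f1 * f2 + p * (a2)) / ((f1 * f2 + p * (- 3%:R * a1)))) ((f1 * f2 + p * (- 3%:R * a1)) / (f1)) (f1 * t2 * ci / (t1)) (f1 ^+ 2 * t2 ^+ 2 * ci ^+ 3 * cj * (f1 * f2 + p * (- 3%:R * a1)) / (t1 ^+ 3)) ci cj (ak - cik * (a1) - cjk * (3%:R * a1 + a2)) (fk + (a1) * uik / (f1) + (3%:R * a1 + a2) * ujk / ((f1 * f2 + p * (- 3%:R * a1)) / (f1))).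
  rewrite iterS /P e1 /rhoj /=; congr mkst; field; nzt.
have := H 1%N erefl; rewrite /nzs e2 /= => -[[n1 [n2 [n3 [n4 [n5 n6]]]]] _].
have hQ_50_51 : (f1 * f2 + p * (a2)) != 0.
  have -> : (f1 * f2 + p * (a2)) = (f1 * (f1 * f2 + p * (a2)) / ((f1 * f2 + p * (- 3%:R * a1)))) * ((f1 * f2 + p * (- 3%:R * a1)) / (f1)) by (field; nzt).
  by rewrite mulf_neq0.
clear n1 n2 n3 n4 n5 n6.
have e3 : rhoi (- 3%:R) cik (- 3%:R * p) uik 1 (iter 1 P s0) = mkst (- 2%:R * a1 - a2) (3%:R * a1 + 2%:R * a2) (f1 * (f1 * f2 + p * (a2)) / ((f1 * f2 + p * (- 3%:R * a1)))) ((f1 * f2 + p * (- 6%:R * a1 - 2%:R * a2)) * (f1 * f2 + p * (- 3%:R * a1)) / (f1 * (f1 * f2 + p * (a2)))) (f1 ^+ 2 * t2 * ci ^+ 3 * cj * (f1 * f2 + p * (a2)) / (t1 ^+ 2)) (f1 ^+ 2 * t2 ^+ 2 * ci ^+ 3 * cj * (f1 * f2 + p * (- 3%:R * a1)) / (t1 ^+ 3)) ci cj (ak - cik * (3%:R * a1 + a2) - cjk * (3%:R * a1 + a2)) (fk + (a1) * uik / (f1) + (3%:R * a1 + a2) * ujk / ((f1 * f2 + p * (- 3%:R * a1)) / (f1)) + (2%:R * a1 + a2) * uik / (f1 * (f1 * f2 + p * (a2)) / ((f1 * f2 + p * (- 3%:R * a1))))).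
  rewrite e2 /rhoi /=; congr mkst; field; nzt.
have := H 1%N erefl; rewrite /nzs e3 /= => -[_ [n1 [n2 [n3 [n4 [n5 n6]]]]]].
have hQ_44_48 : (f1 * f2 + p * (- 6%:R * a1 - 2%:R * a2)) != 0.
  have -> : (f1 * f2 + p * (- 6%:R * a1 - 2%:R * a2)) = (f1 * (f1 * f2 + p * (a2)) / ((f1 * f2 + p * (- 3%:R * a1)))) * ((f1 * f2 + p * (- 6%:R * a1 - 2%:R * a2)) * (f1 * f2 + p * (- 3%:R * a1)) / (f1 * (f1 * f2 + p * (a2)))) by (field; nzt).
  by rewrite mulf_neq0.
clear n1 n2 n3 n4 n5 n6.
have e4 : iter 2 P s0 = mkst (a1 + a2) (- 3%:R * a1 - 2%:R * a2) (f1 * (f1 * f2 + p * (a2)) / ((f1 * f2 + p * (- 6%:R * a1 - 2%:R * a2)))) ((f1 * f2 + p * (- 6%:R * a1 - 2%:R * a2)) * (f1 * f2 + p * (- 3%:R * a1)) / (f1 * (f1 * f2 + p * (a2)))) (f1 ^+ 2 * t2 * ci ^+ 3 * cj * (f1 * f2 + p * (a2)) / (t1 ^+ 2)) (f1 ^+ 3 * t2 * ci ^+ 6 * cj ^+ 3 * (f1 * f2 + p * (- 6%:R * a1 - 2%:R * a2)) * (f1 * f2 + p * (a2)) ^+ 2 / (t1 ^+ 3)) ci cj (ak - cik * (3%:R * a1 + a2) - cjk * (6%:R * a1 + 3%:R * a2)) (fk + (a1) * uik / (f1) + (3%:R * a1 + a2) * ujk / ((f1 * f2 + p * (- 3%:R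 * a1)) / (f1)) + (2%:R * a1 + a2) * uik / (f1 * (f1 * f2 + p * (a2)) / ((f1 * f2 + p * (- 3%:R * a1)))) + (3%:R * a1 + 2%:R * a2) * ujk / ((f1 * f2 + p * (- 6%:R * a1 - 2%:R * a2)) * (f1 * f2 + p * (- 3%:R * a1)) / (f1 * (f1 * f2 + p * (a2))))).
  rewrite iterS /P e3 /rhoj /=; congr mkst; field; nzt.
have := H 2%N erefl; rewrite /nzs e4 /= => -[[n1 [n2 [n3 [n4 [n5 n6]]]]] _].
clear n1 n2 n3 n4 n5 n6.
have e5 : rhoi (- 3%:R) cik (- 3%:R * p) uik 1 (iter 2 P s0) = mkst (- a1 - a2) (a2) (f1 * (f1 * f2 + p * (a2)) / ((f1 * f2 + p * (- 6%:R * a1 - 2%:R * a2)))) ((f1 * f2 + p * (- 6%:R * a1 - 3%:R * a2)) * (f1 * f2 + p * (- 6%:R * a1 - 2%:R * a2)) / (f1 * (f1 * f2 + p * (a2)))) (f1 ^+ 2 * ci ^+ 4 * cj ^+ 2 * (f1 * f2 + p * (a2)) ^+ 2 / (t1)) (f1 ^+ 3 * t2 * ci ^+ 6 * cj ^+ 3 * (f1 * f2 + p * (- 6%:R * a1 - 2%:R * a2)) * (f1 * f2 + p * (a2)) ^+ 2 / (t1 ^+ 3)) ci cj (ak - cik * (4%:R * a1 + 2%:R * a2) - cjk * (6%:R * a1 + 3%:R * a2)) (fk + (a1) * uik / (f1) + (3%:R * a1 + a2) * ujk / ((f1 * f2 + p * (- 3%:R * a1)) / (f1)) + (2%:R * a1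 + a2) * uik / (f1 * (f1 * f2 + p * (a2)) / ((f1 * f2 + p * (- 3%:R * a1)))) + (3%:R * a1 + 2%:R * a2) * ujk / ((f1 * f2 + p * (- 6%:R * a1 - 2%:R * a2)) * (f1 * f2 + p * (- 3%:R * a1)) / (f1 * (f1 * f2 + p * (a2)))) + (a1 + a2) * uik / (f1 * (f1 * f2 + p * (a2)) / ((f1 * f2 + p * (- 6%:R * a1 - 2%:R * a2))))).
  rewrite e4 /rhoi /=; congr mkst; field; nzt.
have := H 2%N erefl; rewrite /nzs e5 /= => -[_ [n1 [n2 [n3 [n4 [n5 n6]]]]]].
have hQ_44_47 : (f1 * f2 + p * (- 6%:R * a1 - 3%:R * a2)) != 0.
  have -> : (f1 * f2 + p * (- 6%:R * a1 - 3%:R * a2)) = (f1 * (f1 * f2 + p * (a2)) / ((f1 * f2 + p * (- 6%:R * a1 - 2%:R * a2)))) * ((f1 * f2 + p * (- 6%:R * a1 - 3%:R * a2)) * (f1 * f2 + p * (- 6%:R * a1 - 2%:R * a2)) / (f1 * (f1 * f2 + p * (a2)))) by (field; nzt).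
  by rewrite mulf_neq0.
clear n1 n2 n3 n4 n5 n6.
have e6 : iter 3 P s0 = mkst (- a1) (- a2) (f1 * (f1 * f2 + p * (a2)) / ((f1 * f2 + p * (- 6%:R * a1 - 3%:R * a2)))) ((f1 * f2 + p * (- 6%:R * a1 - 3%:R * a2)) * (f1 * f2 + p * (- 6%:R * a1 - 2%:R * a2)) / (f1 * (f1 * f2 + p * (a2)))) (f1 ^+ 2 * ci ^+ 4 * cj ^+ 2 * (f1 * f2 + p * (a2)) ^+ 2 / (t1)) (f1 ^+ 2 * ci ^+ 6 * cj ^+ 4 * (f1 * f2 + p * (- 6%:R * a1 - 3%:R * a2)) * (f1 * f2 + p * (a2)) ^+ 3 / (t2)) ci cj (ak - cik * (4%:R * a1 + 2%:R * a2) - cjk * (6%:R * a1 + 4%:R * a2)) (fk + (a1) * uik / (f1) + (3%:R * a1 + a2) * ujk / ((f1 * f2 + p * (- 3%:R * a1)) / (f1)) + (2%:R * a1 + a2) * uik / (f1 * (f1 * f2 + p * (a2)) / ((f1 * f2 + p * (- 3%:R * a1)))) + (3%:R * a1 + 2%:R * a2) * ujk / ((f1 * f2 + p * (- 6%:R * a1 - 2%:R * a2)) * (f1 * f2 + p * (- 3%:R * a1)) / (f1 * (f1 * f2 + p * (a2)))) + (a1 + a2) * uik / (f1 * (f1 * f2 + p * (a2)) / ((f1 * f2 + p * (- 6%:R * a1 - 2%:R * a2)))) + (a2) * ujk / ((f1 * f2 + p * (- 6%:R * a1 - 3%:R * a2)) * (f1 * f2 + p * (- 6%:R * a1 - 2%:R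 * a2)) / (f1 * (f1 * f2 + p * (a2))))).
  rewrite iterS /P e5 /rhoj /=; congr mkst; field; nzt.
have := H 3%N erefl; rewrite /nzs e6 /= => -[[n1 [n2 [n3 [n4 [n5 n6]]]]] _].
clear n1 n2 n3 n4 n5 n6.
have e7 : rhoi (- 3%:R) cik (- 3%:R * p) uik 1 (iter 3 P s0) = mkst (a1) (- 3%:R * a1 - a2) (f1 * (f1 * f2 + p * (a2)) / ((f1 * f2 + p * (- 6%:R * a1 - 3%:R * a2)))) ((f1 * f2 + p * (- 6%:R * a1 - 3%:R * a2)) * (f1 * f2 + p * (- 3%:R * a1 - 2%:R * a2)) / (f1 * (f1 * f2 + p * (a2)))) (f1 * t1 * ci ^+ 3 * cj ^+ 2 * (f1 * f2 + p * (a2)) ^+ 2 / (t2)) (f1 ^+ 2 * ci ^+ 6 * cj ^+ 4 * (f1 * f2 + p * (- 6%:R * a1 - 3%:R * a2)) * (f1 * f2 + p * (a2)) ^+ 3 / (t2)) ci cj (ak - cik * (3%:R * a1 + 2%:R * a2) - cjk * (6%:R * a1 + 4%:R * a2)) (fk + (a1) * uik / (f1) + (3%:R * a1 + a2) * ujk / ((f1 * f2 + p * (- 3%:R * a1)) / (f1)) + (2%:R * a1 + a2) * uik / (f1 * (f1 * f2 + p * (a2)) / ((f1 * f2 + p * (- 3%:R * a1)))) + (3%:R * a1 + 2%:R * a2) * ujk / ((f1 * f2 + p * (- 6%:R * a1 - 2%:R * a2)) * (f1 * f2 + p * (- 3%:R * a1)) / (f1 * (f1 * f2 + p * (a2))))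 + (a1 + a2) * uik / (f1 * (f1 * f2 + p * (a2)) / ((f1 * f2 + p * (- 6%:R * a1 - 2%:R * a2)))) + (a2) * ujk / ((f1 * f2 + p * (- 6%:R * a1 - 3%:R * a2)) * (f1 * f2 + p * (- 6%:R * a1 - 2%:R * a2)) / (f1 * (f1 * f2 + p * (a2)))) + (- a1) * uik / (f1 * (f1 * f2 + p * (a2)) / ((f1 * f2 + p * (- 6%:R * a1 - 3%:R * a2))))).
  rewrite e6 /rhoi /=; congr mkst; field; nzt.
have := H 3%N erefl; rewrite /nzs e7 /= => -[_ [n1 [n2 [n3 [n4 [n5 n6]]]]]].
have hQ_47_48 : (f1 * f2 + p * (- 3%:R * a1 - 2%:R * a2)) != 0.
  have -> : (f1 * f2 + p * (- 3%:R * a1 - 2%:R * a2)) = (f1 * (f1 * f2 + p * (a2)) / ((f1 * f2 + p * (- 6%:R * a1 - 3%:R * a2)))) * ((f1 * f2 + p * (- 6%:R * a1 - 3%:R * a2)) * (f1 * f2 + p * (- 3%:R * a1 - 2%:R * a2)) / (f1 * (f1 * f2 + p * (a2)))) by (field; nzt).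
  by rewrite mulf_neq0.
clear n1 n2 n3 n4 n5 n6.
have e8 : iter 4 P s0 = mkst (- 2%:R * a1 - a2) (3%:R * a1 + a2) (f1 * (f1 * f2 + p * (a2)) / ((f1 * f2 + p * (- 3%:R * a1 - 2%:R * a2)))) ((f1 * f2 + p * (- 6%:R * a1 - 3%:R * a2)) * (f1 * f2 + p * (- 3%:R * a1 - 2%:R * a2)) / (f1 * (f1 * f2 + p * (a2)))) (f1 * t1 * ci ^+ 3 * cj ^+ 2 * (f1 * f2 + p * (a2)) ^+ 2 / (t2)) (t1 ^+ 3 * ci ^+ 3 * cj ^+ 3 * (f1 * f2 + p * (- 3%:R * a1 - 2%:R * a2)) * (f1 * f2 + p * (a2)) ^+ 2 / (t2 ^+ 2)) ci cj (ak - cik * (3%:R * a1 + 2%:R * a2) - cjk * (3%:R * a1 + 3%:R * a2)) (fk + (a1) * uik / (f1) + (3%:R * a1 + a2) * ujk / ((f1 * f2 + p * (- 3%:R * a1)) / (f1)) + (2%:R * a1 + a2) * uik / (f1 * (f1 * f2 + p * (a2)) / ((f1 * f2 + p * (- 3%:R * a1)))) + (3%:R * a1 + 2%:R * a2) * ujk / ((f1 * f2 + p * (- 6%:R * a1 - 2%:R * a2)) * (f1 * f2 + p * (- 3%:R * a1)) / (f1 * (f1 * f2 + p * (a2)))) + (a1 + a2) * uik / (f1 * (f1 * f2 + p * (a2)) / ((f1 * f2 + p * (- 6%:R * a1 - 2%:R * a2)))) + (a2) * ujk / ((f1 * f2 + p * (- 6%:R * a1 - 3%:R * a2)) * (f1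 * f2 + p * (- 6%:R * a1 - 2%:R * a2)) / (f1 * (f1 * f2 + p * (a2)))) + (- a1) * uik / (f1 * (f1 * f2 + p * (a2)) / ((f1 * f2 + p * (- 6%:R * a1 - 3%:R * a2)))) + (- 3%:R * a1 - a2) * ujk / ((f1 * f2 + p * (- 6%:R * a1 - 3%:R * a2)) * (f1 * f2 + p * (- 3%:R * a1 - 2%:R * a2)) / (f1 * (f1 * f2 + p * (a2))))).
  rewrite iterS /P e7 /rhoj /=; congr mkst; field; nzt.
have := H 4%N erefl; rewrite /nzs e8 /= => -[[n1 [n2 [n3 [n4 [n5 n6]]]]] _].
clear n1 n2 n3 n4 n5 n6.
have e9 : rhoi (- 3%:R) cik (- 3%:R * p) uik 1 (iter 4 P s0) = mkst (2%:R * a1 + a2) (- 3%:R * a1 - 2%:R * a2) (f1 * (f1 * f2 + p * (a2)) / ((f1 * f2 + p * (- 3%:R * a1 - 2%:R * a2)))) (f2 * (f1 * f2 + p * (- 3%:R * a1 - 2%:R * a2)) / ((f1 * f2 + p * (a2)))) (t1 ^+ 2 * ci * cj * (f1 * f2 + p * (a2)) / (t2)) (t1 ^+ 3 * ci ^+ 3 * cj ^+ 3 * (f1 * f2 + p * (- 3%:R * a1 - 2%:R * a2)) * (f1 * f2 + p * (a2)) ^+ 2 / (t2 ^+ 2)) ci cj (ak - cik * (a1 + a2) - cjk * (3%:R * a1 + 3%:R * a2)) (fk + (a1) * uik / (f1) + (3%:R * a1 + a2) * ujk / ((f1 * f2 + p * (- 3%:R * a1)) / (f1)) + (2%:R * a1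 + a2) * uik / (f1 * (f1 * f2 + p * (a2)) / ((f1 * f2 + p * (- 3%:R * a1)))) + (3%:R * a1 + 2%:R * a2) * ujk / ((f1 * f2 + p * (- 6%:R * a1 - 2%:R * a2)) * (f1 * f2 + p * (- 3%:R * a1)) / (f1 * (f1 * f2 + p * (a2)))) + (a1 + a2) * uik / (f1 * (f1 * f2 + p * (a2)) / ((f1 * f2 + p * (- 6%:R * a1 - 2%:R * a2)))) + (a2) * ujk / ((f1 * f2 + p * (- 6%:R * a1 - 3%:R * a2)) * (f1 * f2 + p * (- 6%:R * a1 - 2%:R * a2)) / (f1 * (f1 * f2 + p * (a2)))) + (- a1) * uik / (f1 * (f1 * f2 + p * (a2)) / ((f1 * f2 + p * (- 6%:R * a1 - 3%:R * a2)))) + (- 3%:R * a1 - a2) * ujk / ((f1 * f2 + p * (- 6%:R * a1 - 3%:R * a2)) * (f1 * f2 + p * (- 3%:R * a1 - 2%:R * a2)) / (f1 * (f1 * f2 + p * (a2)))) + (- 2%:R * a1 - a2) * uik / (f1 * (f1 * f2 + p * (a2)) / ((f1 * f2 + p * (- 3%:R * a1 - 2%:R * a2))))).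
  rewrite e8 /rhoi /=; congr mkst; field; nzt.
have := H 4%N erefl; rewrite /nzs e9 /= => -[_ [n1 [n2 [n3 [n4 [n5 n6]]]]]].
clear n1 n2 n3 n4 n5 n6.
have e10 : iter 5 P s0 = mkst (- a1 - a2) (3%:R * a1 + 2%:R * a2) ((f1 * f2 + p * (a2)) / (f2)) (f2 * (f1 * f2 + p * (- 3%:R * a1 - 2%:R * a2)) / ((f1 * f2 + p * (a2)))) (t1 ^+ 2 * ci * cj * (f1 * f2 + p * (a2)) / (t2)) (f2 * t1 ^+ 3 * cj / (t2)) ci cj (ak - cik * (a1 + a2) - cjk * (a2)) (fk + (a1) * uik / (f1) + (3%:R * a1 + a2) * ujk / ((f1 * f2 + p * (- 3%:R * a1)) / (f1)) + (2%:R * a1 + a2) * uik / (f1 * (f1 * f2 + p * (a2)) / ((f1 * f2 + p * (- 3%:R * a1)))) + (3%:R * a1 + 2%:R * a2) * ujk / ((f1 * f2 + p * (- 6%:R * a1 - 2%:R * a2)) * (f1 * f2 + p * (- 3%:R * a1)) / (f1 * (f1 * f2 + p * (a2)))) + (a1 + a2) * uik / (f1 * (f1 * f2 + p * (a2)) / ((f1 * f2 + p * (- 6%:R * a1 - 2%:R * a2)))) + (a2) * ujk / ((f1 * f2 + p * (- 6%:R * a1 - 3%:R * a2)) * (f1 * f2 + p * (- 6%:R * a1 - 2%:R * a2)) / (f1 * (f1 * f2 + p * (a2)))) + (- a1) * uik / (f1 * (f1 * f2 + p * (a2)) / ((f1 * f2 + p * (- 6%:R * a1 - 3%:R * a2))))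 + (- 3%:R * a1 - a2) * ujk / ((f1 * f2 + p * (- 6%:R * a1 - 3%:R * a2)) * (f1 * f2 + p * (- 3%:R * a1 - 2%:R * a2)) / (f1 * (f1 * f2 + p * (a2)))) + (- 2%:R * a1 - a2) * uik / (f1 * (f1 * f2 + p * (a2)) / ((f1 * f2 + p * (- 3%:R * a1 - 2%:R * a2)))) + (- 3%:R * a1 - 2%:R * a2) * ujk / (f2 * (f1 * f2 + p * (- 3%:R * a1 - 2%:R * a2)) / ((f1 * f2 + p * (a2))))).
  rewrite iterS /P e9 /rhoj /=; congr mkst; field; nzt.
have := H 5%N erefl; rewrite /nzs e10 /= => -[[n1 [n2 [n3 [n4 [n5 n6]]]]] _].
clear n1 n2 n3 n4 n5 n6.
have e11 : rhoi (- 3%:R) cik (- 3%:R * p) uik 1 (iter 5 P s0) = mkst (a1 + a2) (- a2) ((f1 * f2 + p * (a2)) / (f2)) (f2) (t1) (f2 * t1 ^+ 3 * cj / (t2)) ci cj (ak - cjk * (a2)) (fk + (a1) * uik / (f1) + (3%:R * a1 + a2) * ujk / ((f1 * f2 + p * (- 3%:R * a1)) / (f1)) + (2%:R * a1 + a2) * uik / (f1 * (f1 * f2 + p * (a2)) / ((f1 * f2 + p * (- 3%:R * a1)))) + (3%:R * a1 + 2%:R * a2) * ujk / ((f1 * f2 + p * (- 6%:R * a1 - 2%:R * a2)) * (f1 * f2 + p * (- 3%:R * a1)) / (f1 * (f1 * f2 + p * (a2)))) + (a1 + a2) * uik / (f1 * (f1 * f2 + p * (a2)) / ((f1 * f2 +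 p * (- 6%:R * a1 - 2%:R * a2)))) + (a2) * ujk / ((f1 * f2 + p * (- 6%:R * a1 - 3%:R * a2)) * (f1 * f2 + p * (- 6%:R * a1 - 2%:R * a2)) / (f1 * (f1 * f2 + p * (a2)))) + (- a1) * uik / (f1 * (f1 * f2 + p * (a2)) / ((f1 * f2 + p * (- 6%:R * a1 - 3%:R * a2)))) + (- 3%:R * a1 - a2) * ujk / ((f1 * f2 + p * (- 6%:R * a1 - 3%:R * a2)) * (f1 * f2 + p * (- 3%:R * a1 - 2%:R * a2)) / (f1 * (f1 * f2 + p * (a2)))) + (- 2%:R * a1 - a2) * uik / (f1 * (f1 * f2 + p * (a2)) / ((f1 * f2 + p * (- 3%:R * a1 - 2%:R * a2)))) + (- 3%:R * a1 - 2%:R * a2) * ujk / (f2 * (f1 * f2 + p * (- 3%:R * a1 - 2%:R * a2)) / ((f1 * f2 + p * (a2)))) + (- a1 - a2) * uik / ((f1 * f2 + p * (a2)) / (f2))).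
  rewrite e10 /rhoi /=; congr mkst; field; nzt.
have := H 5%N erefl; rewrite /nzs e11 /= => -[_ [n1 [n2 [n3 [n4 [n5 n6]]]]]].
clear n1 n2 n3 n4 n5 n6.
have e12 : iter 6 P s0 = mkst (a1) (a2) (f1) (f2) (t1) (t2) ci cj (ak) (fk + (a1) * uik / (f1) + (3%:R * a1 + a2) * ujk / ((f1 * f2 + p * (- 3%:R * a1)) / (f1)) + (2%:R * a1 + a2) * uik / (f1 * (f1 * f2 + p * (a2)) / ((f1 * f2 + p * (- 3%:R * a1)))) + (3%:R * a1 + 2%:R * a2) * ujk / ((f1 * f2 + p * (- 6%:R * a1 - 2%:R * a2)) * (f1 * f2 + p * (- 3%:R * a1)) / (f1 * (f1 * f2 + p * (a2)))) + (a1 + a2) * uik / (f1 * (f1 * f2 + p * (a2)) / ((f1 * f2 + p * (- 6%:R * a1 - 2%:R * a2)))) + (a2) * ujk / ((f1 * f2 + p * (- 6%:R * a1 - 3%:R * a2)) * (f1 * f2 + p * (- 6%:R * a1 - 2%:R * a2)) / (f1 * (f1 * f2 + p * (a2)))) + (- a1) * uik / (f1 * (f1 * f2 + p * (a2)) / ((f1 * f2 + p * (- 6%:R * a1 - 3%:R * a2)))) + (- 3%:R * a1 - a2) * ujk / ((f1 * f2 + p * (- 6%:R * a1 - 3%:R * a2)) * (f1 * f2 + p * (- 3%:R * a1 - 2%:R * a2)) / (f1 * (f1 * f2 + p * (a2)))) + (- 2%:R * a1 - a2) * uik / (f1 * (f1 * f2 + p * (a2)) / ((f1 * f2 + p * (-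 3%:R * a1 - 2%:R * a2)))) + (- 3%:R * a1 - 2%:R * a2) * ujk / (f2 * (f1 * f2 + p * (- 3%:R * a1 - 2%:R * a2)) / ((f1 * f2 + p * (a2)))) + (- a1 - a2) * uik / ((f1 * f2 + p * (a2)) / (f2)) + (- a2) * ujk / (f2)).
  rewrite iterS /P e11 /rhoj /=; congr mkst; field; nzt.
change (iter 6 P s0 = s0); rewrite e12 /s0; congr mkst; field; nzt.
Qed.

Lemma case_12 (F : fieldType) (p aij aji uij uji cik cjk uik ujk a1 a2 f1 f2 t1 t2 ci cj ak fk : F) (na nb : nat) :
  na = 1%N -> nb = 2%N ->
  aij = - 1%:R -> aji = - 2%:R -> uij = p -> uji = - 2%:R * p ->
  let P := fun s => rhoj aji cjk uji ujk na (rhoi aij cik uij uik nb s) in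
  let s0 := mkst a1 a2 f1 f2 t1 t2 ci cj ak fk in
  (forall N, (N < 4)%N -> nzs (iter N P s0) /\ nzs (rhoi aij cik uij uik nb (iter N P s0))) ->
  iter 4 P s0 = s0.
Proof.
move=> hna hnb haij haji huij huji; subst na nb aij aji uij uji => P s0 H.
have e0 : iter 0 P s0 = mkst (a1) (a2) (f1) (f2) (t1) (t2) ci cj (ak) (fk) by [].
have := H 0%N erefl; rewrite /nzs e0 /= => -[[n1 [n2 [n3 [n4 [n5 n6]]]]] _].
have b1 := n1; have b2 := n2; have b3 := n3; have b4 := n4; have b5 := n5; have b6 := n6.
clear n1 n2 n3 n4 n5 n6.
have e1 : rhoi (- 1%:R) cik (p) uik 2 (iter 0 P s0) = mkst (- a1) (a1 + a2) (f1) ((f1 * f2 + p * (a1)) / (f1)) (f1 * t2 ^+ 2 * ci / (t1)) (t2) ci cj (ak - cik * (a1)) (fk + (a1) * uik / (f1)).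
  rewrite e0 /rhoi /=; congr mkst; field; nzt.
have := H 0%N erefl; rewrite /nzs e1 /= => -[_ [n1 [n2 [n3 [n4 [n5 n6]]]]]].
have hQ_51_50 : (f1 * f2 + p * (a1)) != 0.
  have -> : (f1 * f2 + p * (a1)) = (f1) * ((f1 * f2 + p * (a1)) / (f1)) by (field; nzt).
  by rewrite mulf_neq0.
clear n1 n2 n3 n4 n5 n6.
have e2 : iter 1 P s0 = mkst (a1 + 2%:R * a2) (- a1 - a2) (f1 * (f1 * f2 + p * (- a1 - 2%:R * a2)) / ((f1 * f2 + p * (a1)))) ((f1 * f2 + p * (a1)) / (f1)) (f1 * t2 ^+ 2 * ci / (t1)) (t2 * ci * cj * (f1 * f2 + p * (a1)) / (t1)) ci cj (ak - cik * (a1) - cjk * (a1 + a2)) (fk + (a1) * uik / (f1) + (a1 + a2) * ujk / ((f1 * f2 + p * (a1)) / (f1))).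
  rewrite iterS /P e1 /rhoj /=; congr mkst; field; nzt.
have := H 1%N erefl; rewrite /nzs e2 /= => -[[n1 [n2 [n3 [n4 [n5 n6]]]]] _].
have hQ_49_48 : (f1 * f2 + p * (- a1 - 2%:R * a2)) != 0.
  have -> : (f1 * f2 + p * (- a1 - 2%:R * a2)) = (f1 * (f1 * f2 + p * (- a1 - 2%:R * a2)) / ((f1 * f2 + p * (a1)))) * ((f1 * f2 + p * (a1)) / (f1)) by (field; nzt).
  by rewrite mulf_neq0.
clear n1 n2 n3 n4 n5 n6.
have e3 : rhoi (- 1%:R) cik (p) uik 2 (iter 1 P s0) = mkst (- a1 - 2%:R * a2) (a2) (f1 * (f1 * f2 + p * (- a1 - 2%:R * a2)) / ((f1 * f2 + p * (a1)))) (f2 * (f1 * f2 + p * (a1)) / ((f1 * f2 + p * (- a1 - 2%:R * a2)))) (ci ^+ 2 * cj ^+ 2 * (f1 * f2 + p * (- a1 - 2%:R * a2)) * (f1 * f2 + p * (a1)) / (t1)) (t2 * ci * cj * (f1 * f2 + p * (a1)) / (t1)) ci cj (ak - cik * (2%:R * a1 + 2%:R * a2) - cjk * (a1 + a2)) (fk + (a1) * uik / (f1) + (a1 + a2) * ujk / ((f1 * f2 + p * (a1)) / (f1)) + (a1 + 2%:R * a2) * uik / (f1 * (f1 * f2 + p * (- a1 - 2%:R * a2)) / ((f1 * f2 + p * (a1))))).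
  rewrite e2 /rhoi /=; congr mkst; field; nzt.
have := H 1%N erefl; rewrite /nzs e3 /= => -[_ [n1 [n2 [n3 [n4 [n5 n6]]]]]].
clear n1 n2 n3 n4 n5 n6.
have e4 : iter 2 P s0 = mkst (- a1) (- a2) ((f1 * f2 + p * (- a1 - 2%:R * a2)) * (f1 * f2 + p * (- 2%:R * a2)) / (f2 * (f1 * f2 + p * (a1)))) (f2 * (f1 * f2 + p * (a1)) / ((f1 * f2 + p * (- a1 - 2%:R * a2)))) (ci ^+ 2 * cj ^+ 2 * (f1 * f2 + p * (- a1 - 2%:R * a2)) * (f1 * f2 + p * (a1)) / (t1)) (f2 * ci * cj ^+ 2 * (f1 * f2 + p * (a1)) / (t2)) ci cj (ak - cik * (2%:R * a1 + 2%:R * a2) - cjk * (a1 + 2%:R * a2)) (fk + (a1) * uik / (f1) + (a1 + a2) * ujk / ((f1 * f2 + p * (a1)) / (f1)) + (a1 + 2%:R * a2) * uik / (f1 * (f1 * f2 + p * (- a1 - 2%:R * a2)) / ((f1 * f2 + p * (a1)))) + (a2) * ujk / (f2 * (f1 * f2 + p * (a1)) / ((f1 * f2 + p * (- a1 - 2%:R * a2))))).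
  rewrite iterS /P e3 /rhoj /=; congr mkst; field; nzt.
have := H 2%N erefl; rewrite /nzs e4 /= => -[[n1 [n2 [n3 [n4 [n5 n6]]]]] _].
have hQ_50_48 : (f1 * f2 + p * (- 2%:R * a2)) != 0.
  have -> : (f1 * f2 + p * (- 2%:R * a2)) = ((f1 * f2 + p * (- a1 - 2%:R * a2)) * (f1 * f2 + p * (- 2%:R * a2)) / (f2 * (f1 * f2 + p * (a1)))) * (f2 * (f1 * f2 + p * (a1)) / ((f1 * f2 + p * (- a1 - 2%:R * a2)))) by (field; nzt).
  by rewrite mulf_neq0.
clear n1 n2 n3 n4 n5 n6.
have e5 : rhoi (- 1%:R) cik (p) uik 2 (iter 2 P s0) = mkst (a1) (- a1 - a2) ((f1 * f2 + p * (- a1 - 2%:R * a2)) * (f1 * f2 + p * (- 2%:R * a2)) / (f2 * (f1 * f2 + p * (a1)))) (f2 * (f1 * f2 + p * (a1)) / ((f1 * f2 + p * (- 2%:R * a2)))) (f2 * t1 * ci * cj ^+ 2 * (f1 * f2 + p * (- 2%:R * a2)) / (t2 ^+ 2)) (f2 * ci * cj ^+ 2 * (f1 * f2 + p * (a1)) / (t2)) ci cj (ak - cik * (a1 + 2%:R * a2) - cjk * (a1 + 2%:R * a2)) (fk + (a1) * uik / (f1) + (a1 + a2) * ujk / ((f1 * f2 + p * (a1)) / (f1)) + (a1 + 2%:R * a2) * uik / (f1 * (f1 * f2 + p * (- a1 - 2%:R * a2)) / ((f1 * f2 + p * (a1)))) + (a2) * ujk / (f2 * (f1 * f2 + p * (a1))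 / ((f1 * f2 + p * (- a1 - 2%:R * a2)))) + (- a1) * uik / ((f1 * f2 + p * (- a1 - 2%:R * a2)) * (f1 * f2 + p * (- 2%:R * a2)) / (f2 * (f1 * f2 + p * (a1))))).
  rewrite e4 /rhoi /=; congr mkst; field; nzt.
have := H 2%N erefl; rewrite /nzs e5 /= => -[_ [n1 [n2 [n3 [n4 [n5 n6]]]]]].
clear n1 n2 n3 n4 n5 n6.
have e6 : iter 3 P s0 = mkst (- a1 - 2%:R * a2) (a1 + a2) ((f1 * f2 + p * (- 2%:R * a2)) / (f2)) (f2 * (f1 * f2 + p * (a1)) / ((f1 * f2 + p * (- 2%:R * a2)))) (f2 * t1 * ci * cj ^+ 2 * (f1 * f2 + p * (- 2%:R * a2)) / (t2 ^+ 2)) (f2 * t1 * cj / (t2)) ci cj (ak - cik * (a1 + 2%:R * a2) - cjk * (a2)) (fk + (a1) * uik / (f1) + (a1 + a2) * ujk / ((f1 * f2 + p * (a1)) / (f1)) + (a1 + 2%:R * a2) * uik / (f1 * (f1 * f2 + p * (- a1 - 2%:R * a2)) / ((f1 * f2 + p * (a1)))) + (a2) * ujk / (f2 * (f1 * f2 + p * (a1)) / ((f1 * f2 + p * (- a1 - 2%:R * a2)))) + (- a1) * uik / ((f1 * f2 + p * (- a1 - 2%:R * a2)) * (f1 * f2 + p * (- 2%:R * a2)) / (f2 * (f1 * f2 + p * (a1)))) + (- a1 - a2) * ujk / (f2 * (f1 * f2 + p * (a1)) / ((f1 * f2 + p * (- 2%:R * a2))))).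
  rewrite iterS /P e5 /rhoj /=; congr mkst; field; nzt.
have := H 3%N erefl; rewrite /nzs e6 /= => -[[n1 [n2 [n3 [n4 [n5 n6]]]]] _].
clear n1 n2 n3 n4 n5 n6.
have e7 : rhoi (- 1%:R) cik (p) uik 2 (iter 3 P s0) = mkst (a1 + 2%:R * a2) (- a2) ((f1 * f2 + p * (- 2%:R * a2)) / (f2)) (f2) (t1) (f2 * t1 * cj / (t2)) ci cj (ak - cjk * (a2)) (fk + (a1) * uik / (f1) + (a1 + a2) * ujk / ((f1 * f2 + p * (a1)) / (f1)) + (a1 + 2%:R * a2) * uik / (f1 * (f1 * f2 + p * (- a1 - 2%:R * a2)) / ((f1 * f2 + p * (a1)))) + (a2) * ujk / (f2 * (f1 * f2 + p * (a1)) / ((f1 * f2 + p * (- a1 - 2%:R * a2)))) + (- a1) * uik / ((f1 * f2 + p * (- a1 - 2%:R * a2)) * (f1 * f2 + p * (- 2%:R * a2)) / (f2 * (f1 * f2 + p * (a1)))) + (- a1 - a2) * ujk / (f2 * (f1 * f2 + p * (a1)) / ((f1 * f2 + p * (- 2%:R * a2)))) + (- a1 - 2%:R * a2) * uik / ((f1 * f2 + p * (- 2%:R * a2)) / (f2))).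
  rewrite e6 /rhoi /=; congr mkst; field; nzt.
have := H 3%N erefl; rewrite /nzs e7 /= => -[_ [n1 [n2 [n3 [n4 [n5 n6]]]]]].
clear n1 n2 n3 n4 n5 n6.
have e8 : iter 4 P s0 = mkst (a1) (a2) (f1) (f2) (t1) (t2) ci cj (ak) (fk + (a1) * uik / (f1) + (a1 + a2) * ujk / ((f1 * f2 + p * (a1)) / (f1)) + (a1 + 2%:R * a2) * uik / (f1 * (f1 * f2 + p * (- a1 - 2%:R * a2)) / ((f1 * f2 + p * (a1)))) + (a2) * ujk / (f2 * (f1 * f2 + p * (a1)) / ((f1 * f2 + p * (- a1 - 2%:R * a2)))) + (- a1) * uik / ((f1 * f2 + p * (- a1 - 2%:R * a2)) * (f1 * f2 + p * (- 2%:R * a2)) / (f2 * (f1 * f2 + p * (a1)))) + (- a1 - a2) * ujk / (f2 * (f1 * f2 + p * (a1)) / ((f1 * f2 + p * (- 2%:R * a2)))) + (- a1 - 2%:R * a2) * uik / ((f1 * f2 + p * (- 2%:R * a2)) / (f2)) + (- a2) * ujk / (f2)).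
  rewrite iterS /P e7 /rhoj /=; congr mkst; field; nzt.
change (iter 4 P s0 = s0); rewrite e8 /s0; congr mkst; field; nzt.
Qed.

Lemma case_13 (F : fieldType) (p aij aji uij uji cik cjk uik ujk a1 a2 f1 f2 t1 t2 ci cj ak fk : F) (na nb : nat) :
  na = 1%N -> nb = 3%N ->
  aij = - 1%:R -> aji = - 3%:R -> uij = p -> uji = - 3%:R * p ->
  let P := fun s => rhoj aji cjk uji ujk na (rhoi aij cik uij uik nb s) in
  let s0 := mkst a1 a2 f1 f2 t1 t2 ci cj ak fk in
  (forall N, (N < 6)%N -> nzs (iter N P s0) /\ nzs (rhoi aij cik uij uik nb (iter N P s0))) ->
  iter 6 P s0 = s0.
Proof.
move=> hna hnb haij haji huij huji; subst na nb aij aji uij uji => P s0 H.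
have e0 : iter 0 P s0 = mkst (a1) (a2) (f1) (f2) (t1) (t2) ci cj (ak) (fk) by [].
have := H 0%N erefl; rewrite /nzs e0 /= => -[[n1 [n2 [n3 [n4 [n5 n6]]]]] _].
have b1 := n1; have b2 := n2; have b3 := n3; have b4 := n4; have b5 := n5; have b6 := n6.
clear n1 n2 n3 n4 n5 n6.
have e1 : rhoi (- 1%:R) cik (p) uik 3 (iter 0 P s0) = mkst (- a1) (a1 + a2) (f1) ((f1 * f2 + p * (a1)) / (f1)) (f1 * t2 ^+ 3 * ci / (t1)) (t2) ci cj (ak - cik * (a1)) (fk + (a1) * uik / (f1)).
  rewrite e0 /rhoi /=; congr mkst; field; nzt.
have := H 0%N erefl; rewrite /nzs e1 /= => -[_ [n1 [n2 [n3 [n4 [n5 n6]]]]]].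
have hQ_51_50 : (f1 * f2 + p * (a1)) != 0.
  have -> : (f1 * f2 + p * (a1)) = (f1) * ((f1 * f2 + p * (a1)) / (f1)) by (field; nzt).
  by rewrite mulf_neq0.
clear n1 n2 n3 n4 n5 n6.
have e2 : iter 1 P s0 = mkst (2%:R * a1 + 3%:R * a2) (- a1 - a2) (f1 * (f1 * f2 + p * (- 2%:R * a1 - 3%:R * a2)) / ((f1 * f2 + p * (a1)))) ((f1 * f2 + p * (a1)) / (f1)) (f1 * t2 ^+ 3 * ci / (t1)) (t2 ^+ 2 * ci * cj * (f1 * f2 + p * (a1)) / (t1)) ci cj (ak - cik * (a1) - cjk * (a1 + a2)) (fk + (a1) * uik / (f1) + (a1 + a2) * ujk / ((f1 * f2 + p * (a1)) / (f1))).
  rewrite iterS /P e1 /rhoj /=; congr mkst; field; nzt.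
have := H 1%N erefl; rewrite /nzs e2 /= => -[[n1 [n2 [n3 [n4 [n5 n6]]]]] _].
have hQ_48_47 : (f1 * f2 + p * (- 2%:R * a1 - 3%:R * a2)) != 0.
  have -> : (f1 * f2 + p * (- 2%:R * a1 - 3%:R * a2)) = (f1 * (f1 * f2 + p * (- 2%:R * a1 - 3%:R * a2)) / ((f1 * f2 + p * (a1)))) * ((f1 * f2 + p * (a1)) / (f1)) by (field; nzt).
  by rewrite mulf_neq0.
clear n1 n2 n3 n4 n5 n6.
have e3 : rhoi (- 1%:R) cik (p) uik 3 (iter 1 P s0) = mkst (- 2%:R * a1 - 3%:R * a2) (a1 + 2%:R * a2) (f1 * (f1 * f2 + p * (- 2%:R * a1 - 3%:R * a2)) / ((f1 * f2 + p * (a1)))) (f2 * (f1 * f2 + p * (a1)) / ((f1 * f2 + p * (- 2%:R * a1 - 3%:R * a2)))) (t2 ^+ 3 * ci ^+ 3 * cj ^+ 3 * (f1 * f2 + p * (- 2%:R * a1 - 3%:R * a2)) * (f1 * f2 + p * (a1)) ^+ 2 / (t1 ^+ 2)) (t2 ^+ 2 * ci * cj * (f1 * f2 + p * (a1)) / (t1)) ci cj (ak - cik * (3%:R * a1 + 3%:R * a2) - cjk * (a1 + a2)) (fk + (a1) * uik / (f1) + (a1 + a2) * ujk / ((f1 * f2 + p * (a1)) / (f1)) + (2%:R * a1 + 3%:R * a2) * uik / (f1 * (f1 * f2 + p * (- 2%:R * a1 - 3%:R * a2)) / ((f1 * f2 + p * (a1))))).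
  rewrite e2 /rhoi /=; congr mkst; field; nzt.
have := H 1%N erefl; rewrite /nzs e3 /= => -[_ [n1 [n2 [n3 [n4 [n5 n6]]]]]].
clear n1 n2 n3 n4 n5 n6.
have e4 : iter 2 P s0 = mkst (a1 + 3%:R * a2) (- a1 - 2%:R * a2) ((f1 * f2 + p * (- 3%:R * a1 - 6%:R * a2)) * (f1 * f2 + p * (- 2%:R * a1 - 3%:R * a2)) / (f2 * (f1 * f2 + p * (a1)))) (f2 * (f1 * f2 + p * (a1)) / ((f1 * f2 + p * (- 2%:R * a1 - 3%:R * a2)))) (t2 ^+ 3 * ci ^+ 3 * cj ^+ 3 * (f1 * f2 + p * (- 2%:R * a1 - 3%:R * a2)) * (f1 * f2 + p * (a1)) ^+ 2 / (t1 ^+ 2)) (f2 * t2 * ci ^+ 2 * cj ^+ 3 * (f1 * f2 + p * (a1)) ^+ 2 / (t1)) ci cj (ak - cik * (3%:R * a1 + 3%:R * a2) - cjk * (2%:R * a1 + 3%:R * a2)) (fk + (a1) * uik / (f1) + (a1 + a2) * ujk / ((f1 * f2 + p * (a1)) / (f1)) + (2%:R * a1 + 3%:R * a2) * uik / (f1 * (f1 * f2 + p * (- 2%:R * a1 - 3%:R * a2)) / ((f1 * f2 + p * (a1)))) + (a1 + 2%:R * a2) * ujk / (f2 * (f1 * f2 + p * (a1)) / ((f1 * f2 + p * (- 2%:R * a1 - 3%:R * a2))))).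
  rewrite iterS /P e3 /rhoj /=; congr mkst; field; nzt.
have := H 2%N erefl; rewrite /nzs e4 /= => -[[n1 [n2 [n3 [n4 [n5 n6]]]]] _].
have hQ_47_44 : (f1 * f2 + p * (- 3%:R * a1 - 6%:R * a2)) != 0.
  have -> : (f1 * f2 + p * (- 3%:R * a1 - 6%:R * a2)) = ((f1 * f2 + p * (- 3%:R * a1 - 6%:R * a2)) * (f1 * f2 + p * (- 2%:R * a1 - 3%:R * a2)) / (f2 * (f1 * f2 + p * (a1)))) * (f2 * (f1 * f2 + p * (a1)) / ((f1 * f2 + p * (- 2%:R * a1 - 3%:R * a2)))) by (field; nzt).
  by rewrite mulf_neq0.
clear n1 n2 n3 n4 n5 n6.
have e5 : rhoi (- 1%:R) cik (p) uik 3 (iter 2 P s0) = mkst (- a1 - 3%:R * a2) (a2) ((f1 * f2 + p * (- 3%:R * a1 - 6%:R * a2)) * (f1 * f2 + p * (- 2%:R * a1 - 3%:R * a2)) / (f2 * (f1 * f2 + p * (a1)))) (f2 * (f1 * f2 + p * (a1)) / ((f1 * f2 + p * (- 3%:R * a1 - 6%:R * a2)))) (f2 ^+ 2 * ci ^+ 4 * cj ^+ 6 * (f1 * f2 + p * (- 3%:R * a1 - 6%:R * a2)) * (f1 * f2 + p * (a1)) ^+ 3 / (t1)) (f2 * t2 * ci ^+ 2 * cj ^+ 3 * (f1 * f2 + p * (a1)) ^+ 2 / (t1)) ci cj (ak - cik * (4%:R * a1 + 6%:R * a2) - cjk * (2%:R * a1 + 3%:R * a2)) (fk + (a1) * uik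 / (f1) + (a1 + a2) * ujk / ((f1 * f2 + p * (a1)) / (f1)) + (2%:R * a1 + 3%:R * a2) * uik / (f1 * (f1 * f2 + p * (- 2%:R * a1 - 3%:R * a2)) / ((f1 * f2 + p * (a1)))) + (a1 + 2%:R * a2) * ujk / (f2 * (f1 * f2 + p * (a1)) / ((f1 * f2 + p * (- 2%:R * a1 - 3%:R * a2)))) + (a1 + 3%:R * a2) * uik / ((f1 * f2 + p * (- 3%:R * a1 - 6%:R * a2)) * (f1 * f2 + p * (- 2%:R * a1 - 3%:R * a2)) / (f2 * (f1 * f2 + p * (a1))))).
  rewrite e4 /rhoi /=; congr mkst; field; nzt.
have := H 2%N erefl; rewrite /nzs e5 /= => -[_ [n1 [n2 [n3 [n4 [n5 n6]]]]]].
clear n1 n2 n3 n4 n5 n6.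
have e6 : iter 3 P s0 = mkst (- a1) (- a2) ((f1 * f2 + p * (- 3%:R * a1 - 6%:R * a2)) * (f1 * f2 + p * (- 2%:R * a1 - 6%:R * a2)) / (f2 * (f1 * f2 + p * (a1)))) (f2 * (f1 * f2 + p * (a1)) / ((f1 * f2 + p * (- 3%:R * a1 - 6%:R * a2)))) (f2 ^+ 2 * ci ^+ 4 * cj ^+ 6 * (f1 * f2 + p * (- 3%:R * a1 - 6%:R * a2)) * (f1 * f2 + p * (a1)) ^+ 3 / (t1)) (f2 ^+ 2 * ci ^+ 2 * cj ^+ 4 * (f1 * f2 + p * (a1)) ^+ 2 / (t2)) ci cj (ak - cik * (4%:R * a1 + 6%:R * a2) - cjk * (2%:R * a1 + 4%:R * a2)) (fk + (a1) * uik / (f1) + (a1 + a2) * ujk / ((f1 * f2 + p * (a1)) / (f1)) + (2%:R * a1 + 3%:R * a2) * uik / (f1 * (f1 * f2 + p * (- 2%:R * a1 - 3%:R * a2)) / ((f1 * f2 + p * (a1)))) + (a1 + 2%:R * a2) * ujk / (f2 * (f1 * f2 + p * (a1)) / ((f1 * f2 + p * (- 2%:R * a1 - 3%:R * a2)))) + (a1 + 3%:R * a2) * uik / ((f1 * f2 + p * (- 3%:R * a1 - 6%:R * a2)) * (f1 * f2 + p * (- 2%:R * a1 - 3%:R * a2)) / (f2 * (f1 * f2 + p * (a1)))) + (a2) * ujk / (f2 * (f1 * f2 + p * (a1)) / ((f1 * f2 + p * (- 3%:R * a1 - 6%:R * a2))))).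
  rewrite iterS /P e5 /rhoj /=; congr mkst; field; nzt.
have := H 3%N erefl; rewrite /nzs e6 /= => -[[n1 [n2 [n3 [n4 [n5 n6]]]]] _].
have hQ_48_44 : (f1 * f2 + p * (- 2%:R * a1 - 6%:R * a2)) != 0.
  have -> : (f1 * f2 + p * (- 2%:R * a1 - 6%:R * a2)) = ((f1 * f2 + p * (- 3%:R * a1 - 6%:R * a2)) * (f1 * f2 + p * (- 2%:R * a1 - 6%:R * a2)) / (f2 * (f1 * f2 + p * (a1)))) * (f2 * (f1 * f2 + p * (a1)) / ((f1 * f2 + p * (- 3%:R * a1 - 6%:R * a2)))) by (field; nzt).
  by rewrite mulf_neq0.
clear n1 n2 n3 n4 n5 n6.
have e7 : rhoi (- 1%:R) cik (p) uik 3 (iter 3 P s0) = mkst (a1) (- a1 - a2) ((f1 * f2 + p * (- 3%:R * a1 - 6%:R * a2)) * (f1 * f2 + p * (- 2%:R * a1 - 6%:R * a2)) / (f2 * (f1 * f2 + p * (a1)))) (f2 * (f1 * f2 + p * (a1)) / ((f1 * f2 + p * (- 2%:R * a1 - 6%:R * a2)))) (f2 ^+ 3 * t1 * ci ^+ 3 * cj ^+ 6 * (f1 * f2 + p * (- 2%:R * a1 - 6%:R * a2)) * (f1 * f2 + p * (a1)) ^+ 2 / (t2 ^+ 3)) (f2 ^+ 2 * ci ^+ 2 * cj ^+ 4 * (f1 * f2 + p * (a1)) ^+ 2 / (t2)) ci cj (ak - cik * (3%:R * a1 + 6%:R * a2) - cjk * (2%:R * a1 + 4%:R * a2)) (fk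 + (a1) * uik / (f1) + (a1 + a2) * ujk / ((f1 * f2 + p * (a1)) / (f1)) + (2%:R * a1 + 3%:R * a2) * uik / (f1 * (f1 * f2 + p * (- 2%:R * a1 - 3%:R * a2)) / ((f1 * f2 + p * (a1)))) + (a1 + 2%:R * a2) * ujk / (f2 * (f1 * f2 + p * (a1)) / ((f1 * f2 + p * (- 2%:R * a1 - 3%:R * a2)))) + (a1 + 3%:R * a2) * uik / ((f1 * f2 + p * (- 3%:R * a1 - 6%:R * a2)) * (f1 * f2 + p * (- 2%:R * a1 - 3%:R * a2)) / (f2 * (f1 * f2 + p * (a1)))) + (a2) * ujk / (f2 * (f1 * f2 + p * (a1)) / ((f1 * f2 + p * (- 3%:R * a1 - 6%:R * a2)))) + (- a1) * uik / ((f1 * f2 + p * (- 3%:R * a1 - 6%:R * a2)) * (f1 * f2 + p * (- 2%:R * a1 - 6%:R * a2)) / (f2 * (f1 * f2 + p * (a1))))).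
  rewrite e6 /rhoi /=; congr mkst; field; nzt.
have := H 3%N erefl; rewrite /nzs e7 /= => -[_ [n1 [n2 [n3 [n4 [n5 n6]]]]]].
clear n1 n2 n3 n4 n5 n6.
have e8 : iter 4 P s0 = mkst (- 2%:R * a1 - 3%:R * a2) (a1 + a2) ((f1 * f2 + p * (- 2%:R * a1 - 6%:R * a2)) * (f1 * f2 + p * (- 3%:R * a2)) / (f2 * (f1 * f2 + p * (a1)))) (f2 * (f1 * f2 + p * (a1)) / ((f1 * f2 + p * (- 2%:R * a1 - 6%:R * a2)))) (f2 ^+ 3 * t1 * ci ^+ 3 * cj ^+ 6 * (f1 * f2 + p * (- 2%:R * a1 - 6%:R * a2)) * (f1 * f2 + p * (a1)) ^+ 2 / (t2 ^+ 3)) (f2 ^+ 2 * t1 * ci * cj ^+ 3 * (f1 * f2 + p * (a1)) / (t2 ^+ 2)) ci cj (ak - cik * (3%:R * a1 + 6%:R * a2) - cjk * (a1 + 3%:R * a2)) (fk + (a1) * uik / (f1) + (a1 + a2) * ujk / ((f1 * f2 + p * (a1)) / (f1)) + (2%:R * a1 + 3%:R * a2) * uik / (f1 * (f1 * f2 + p * (- 2%:R * a1 - 3%:R * a2)) / ((f1 * f2 + p * (a1)))) + (a1 + 2%:R * a2) * ujk / (f2 * (f1 * f2 + p * (a1)) / ((f1 * f2 + p * (- 2%:R * a1 - 3%:R * a2)))) + (a1 + 3%:R * a2) * uik / ((f1 * f2 + p * (- 3%:R * a1 - 6%:R * a2)) * (f1 * f2 + p * (- 2%:R * a1 - 3%:R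 * a2)) / (f2 * (f1 * f2 + p * (a1)))) + (a2) * ujk / (f2 * (f1 * f2 + p * (a1)) / ((f1 * f2 + p * (- 3%:R * a1 - 6%:R * a2)))) + (- a1) * uik / ((f1 * f2 + p * (- 3%:R * a1 - 6%:R * a2)) * (f1 * f2 + p * (- 2%:R * a1 - 6%:R * a2)) / (f2 * (f1 * f2 + p * (a1)))) + (- a1 - a2) * ujk / (f2 * (f1 * f2 + p * (a1)) / ((f1 * f2 + p * (- 2%:R * a1 - 6%:R * a2))))).
  rewrite iterS /P e7 /rhoj /=; congr mkst; field; nzt.
have := H 4%N erefl; rewrite /nzs e8 /= => -[[n1 [n2 [n3 [n4 [n5 n6]]]]] _].
have hQ_50_47 : (f1 * f2 + p * (- 3%:R * a2)) != 0.
  have -> : (f1 * f2 + p * (- 3%:R * a2)) = ((f1 * f2 + p * (- 2%:R * a1 - 6%:R * a2)) * (f1 * f2 + p * (- 3%:R * a2)) / (f2 * (f1 * f2 + p * (a1)))) * (f2 * (f1 * f2 + p * (a1)) / ((f1 * f2 + p * (- 2%:R * a1 - 6%:R * a2)))) by (field; nzt).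
  by rewrite mulf_neq0.
clear n1 n2 n3 n4 n5 n6.
have e9 : rhoi (- 1%:R) cik (p) uik 3 (iter 4 P s0) = mkst (2%:R * a1 + 3%:R * a2) (- a1 - 2%:R * a2) ((f1 * f2 + p * (- 2%:R * a1 - 6%:R * a2)) * (f1 * f2 + p * (- 3%:R * a2)) / (f2 * (f1 * f2 + p * (a1)))) (f2 * (f1 * f2 + p * (a1)) / ((f1 * f2 + p * (- 3%:R * a2)))) (f2 ^+ 2 * t1 ^+ 2 * ci * cj ^+ 3 * (f1 * f2 + p * (- 3%:R * a2)) / (t2 ^+ 3)) (f2 ^+ 2 * t1 * ci * cj ^+ 3 * (f1 * f2 + p * (a1)) / (t2 ^+ 2)) ci cj (ak - cik * (a1 + 3%:R * a2) - cjk * (a1 + 3%:R * a2)) (fk + (a1) * uik / (f1) + (a1 + a2) * ujk / ((f1 * f2 + p * (a1)) / (f1)) + (2%:R * a1 + 3%:R * a2) * uik / (f1 * (f1 * f2 + p * (- 2%:R * a1 - 3%:R * a2)) / ((f1 * f2 + p * (a1)))) + (a1 + 2%:R * a2) * ujk / (f2 * (f1 * f2 + p * (a1)) / ((f1 * f2 + p * (- 2%:R * a1 - 3%:R * a2)))) + (a1 + 3%:R * a2) * uik / ((f1 * f2 + p * (- 3%:R * a1 - 6%:R * a2)) * (f1 * f2 + p * (- 2%:R * a1 - 3%:R * a2)) / (f2 * (f1 * f2 + p * (a1)))) + (a2) * ujk / (f2 * (f1 * f2 + p * (a1)) / ((f1 * f2 + p * (- 3%:R * a1 - 6%:R * a2))))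 + (- a1) * uik / ((f1 * f2 + p * (- 3%:R * a1 - 6%:R * a2)) * (f1 * f2 + p * (- 2%:R * a1 - 6%:R * a2)) / (f2 * (f1 * f2 + p * (a1)))) + (- a1 - a2) * ujk / (f2 * (f1 * f2 + p * (a1)) / ((f1 * f2 + p * (- 2%:R * a1 - 6%:R * a2)))) + (- 2%:R * a1 - 3%:R * a2) * uik / ((f1 * f2 + p * (- 2%:R * a1 - 6%:R * a2)) * (f1 * f2 + p * (- 3%:R * a2)) / (f2 * (f1 * f2 + p * (a1))))).
  rewrite e8 /rhoi /=; congr mkst; field; nzt.
have := H 4%N erefl; rewrite /nzs e9 /= => -[_ [n1 [n2 [n3 [n4 [n5 n6]]]]]].
clear n1 n2 n3 n4 n5 n6.
have e10 : iter 5 P s0 = mkst (- a1 - 3%:R * a2) (a1 + 2%:R * a2) ((f1 * f2 + p * (- 3%:R * a2)) / (f2)) (f2 * (f1 * f2 + p * (a1)) / ((f1 * f2 + p * (- 3%:R * a2)))) (f2 ^+ 2 * t1 ^+ 2 * ci * cj ^+ 3 * (f1 * f2 + p * (- 3%:R * a2)) / (t2 ^+ 3)) (f2 * t1 * cj / (t2)) ci cj (ak - cik * (a1 + 3%:R * a2) - cjk * (a2)) (fk + (a1) * uik / (f1) + (a1 + a2) * ujk / ((f1 * f2 + p * (a1)) / (f1)) + (2%:R * a1 + 3%:R * a2) * uik / (f1 * (f1 * f2 + p * (- 2%:R * a1 - 3%:R * a2)) / ((f1 * f2 + p * (a1)))) + (a1 + 2%:R * a2) * ujk / (f2 * (f1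 * f2 + p * (a1)) / ((f1 * f2 + p * (- 2%:R * a1 - 3%:R * a2)))) + (a1 + 3%:R * a2) * uik / ((f1 * f2 + p * (- 3%:R * a1 - 6%:R * a2)) * (f1 * f2 + p * (- 2%:R * a1 - 3%:R * a2)) / (f2 * (f1 * f2 + p * (a1)))) + (a2) * ujk / (f2 * (f1 * f2 + p * (a1)) / ((f1 * f2 + p * (- 3%:R * a1 - 6%:R * a2)))) + (- a1) * uik / ((f1 * f2 + p * (- 3%:R * a1 - 6%:R * a2)) * (f1 * f2 + p * (- 2%:R * a1 - 6%:R * a2)) / (f2 * (f1 * f2 + p * (a1)))) + (- a1 - a2) * ujk / (f2 * (f1 * f2 + p * (a1)) / ((f1 * f2 + p * (- 2%:R * a1 - 6%:R * a2)))) + (- 2%:R * a1 - 3%:R * a2) * uik / ((f1 * f2 + p * (- 2%:R * a1 - 6%:R * a2)) * (f1 * f2 + p * (- 3%:R * a2)) / (f2 * (f1 * f2 + p * (a1)))) + (- a1 - 2%:R * a2) * ujk / (f2 * (f1 * f2 + p * (a1)) / ((f1 * f2 + p * (- 3%:R * a2))))).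
  rewrite iterS /P e9 /rhoj /=; congr mkst; field; nzt.
have := H 5%N erefl; rewrite /nzs e10 /= => -[[n1 [n2 [n3 [n4 [n5 n6]]]]] _].
clear n1 n2 n3 n4 n5 n6.
have e11 : rhoi (- 1%:R) cik (p) uik 3 (iter 5 P s0) = mkst (a1 + 3%:R * a2) (- a2) ((f1 * f2 + p * (- 3%:R * a2)) / (f2)) (f2) (t1) (f2 * t1 * cj / (t2)) ci cj (ak - cjk * (a2)) (fk + (a1) * uik / (f1) + (a1 + a2) * ujk / ((f1 * f2 + p * (a1)) / (f1)) + (2%:R * a1 + 3%:R * a2) * uik / (f1 * (f1 * f2 + p * (- 2%:R * a1 - 3%:R * a2)) / ((f1 * f2 + p * (a1)))) + (a1 + 2%:R * a2) * ujk / (f2 * (f1 * f2 + p * (a1)) / ((f1 * f2 + p * (- 2%:R * a1 - 3%:R * a2)))) + (a1 + 3%:R * a2) * uik / ((f1 * f2 + p * (- 3%:R * a1 - 6%:R * a2)) * (f1 * f2 + p * (- 2%:R * a1 - 3%:R * a2)) / (f2 * (f1 * f2 + p * (a1)))) + (a2) * ujk / (f2 * (f1 * f2 + p * (a1)) / ((f1 * f2 + p * (- 3%:R * a1 - 6%:R * a2)))) + (- a1) * uik / ((f1 * f2 + p * (- 3%:R * a1 - 6%:R * a2)) * (f1 * f2 + p * (- 2%:R * a1 - 6%:R * a2)) / (f2 * (f1 * f2 + p * (a1)))) + (- a1 - a2) * ujk / (f2 * (f1 * f2 + p * (a1)) / ((f1 * f2 + p * (- 2%:R * a1 - 6%:R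 * a2)))) + (- 2%:R * a1 - 3%:R * a2) * uik / ((f1 * f2 + p * (- 2%:R * a1 - 6%:R * a2)) * (f1 * f2 + p * (- 3%:R * a2)) / (f2 * (f1 * f2 + p * (a1)))) + (- a1 - 2%:R * a2) * ujk / (f2 * (f1 * f2 + p * (a1)) / ((f1 * f2 + p * (- 3%:R * a2)))) + (- a1 - 3%:R * a2) * uik / ((f1 * f2 + p * (- 3%:R * a2)) / (f2))).
  rewrite e10 /rhoi /=; congr mkst; field; nzt.
have := H 5%N erefl; rewrite /nzs e11 /= => -[_ [n1 [n2 [n3 [n4 [n5 n6]]]]]].
clear n1 n2 n3 n4 n5 n6.
have e12 : iter 6 P s0 = mkst (a1) (a2) (f1) (f2) (t1) (t2) ci cj (ak) (fk + (a1) * uik / (f1) + (a1 + a2) * ujk / ((f1 * f2 + p * (a1)) / (f1)) + (2%:R * a1 + 3%:R * a2) * uik / (f1 * (f1 * f2 + p * (- 2%:R * a1 - 3%:R * a2)) / ((f1 * f2 + p * (a1)))) + (a1 + 2%:R * a2) * ujk / (f2 * (f1 * f2 + p * (a1)) / ((f1 * f2 + p * (- 2%:R * a1 - 3%:R * a2)))) + (a1 + 3%:R * a2) * uik / ((f1 * f2 + p * (- 3%:R * a1 - 6%:R * a2)) * (f1 * f2 + p * (- 2%:R * a1 - 3%:R * a2)) / (f2 * (f1 * f2 + p * (a1)))) + (a2) * ujk / (f2 * (f1 * f2 + p * (a1)) / ((f1 * f2 + p * (- 3%:R * a1 - 6%:R * a2)))) + (- a1) * uik / ((f1 * f2 + p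 * (- 3%:R * a1 - 6%:R * a2)) * (f1 * f2 + p * (- 2%:R * a1 - 6%:R * a2)) / (f2 * (f1 * f2 + p * (a1)))) + (- a1 - a2) * ujk / (f2 * (f1 * f2 + p * (a1)) / ((f1 * f2 + p * (- 2%:R * a1 - 6%:R * a2)))) + (- 2%:R * a1 - 3%:R * a2) * uik / ((f1 * f2 + p * (- 2%:R * a1 - 6%:R * a2)) * (f1 * f2 + p * (- 3%:R * a2)) / (f2 * (f1 * f2 + p * (a1)))) + (- a1 - 2%:R * a2) * ujk / (f2 * (f1 * f2 + p * (a1)) / ((f1 * f2 + p * (- 3%:R * a2)))) + (- a1 - 3%:R * a2) * uik / ((f1 * f2 + p * (- 3%:R * a2)) / (f2)) + (- a2) * ujk / (f2)).
  rewrite iterS /P e11 /rhoj /=; congr mkst; field; nzt.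
change (iter 6 P s0 = s0); rewrite e12 /s0; congr mkst; field; nzt.
Qed.

Lemma gI1 (F : fieldType) (x y f c two : F) : two = 2 -> (x + y / f * c) + (y - two * y) / f * c = x.
Proof. by move=> ->; ring. Qed.
Lemma gI2 (F : fieldType) (f t N : F) : f != 0 -> t != 0 -> N != 0 ->
  f * (f * t * ((t ^+ 2)^-1 * N)) * (((f * t * ((t ^+ 2)^-1 * N)) ^+ 2)^-1 * N) = t.
Proof. by move=> h1 h2 h3; field; rewrite h1 h2 h3. Qed.
Lemma rA (F : fieldType) (a two : F) : two = 2 -> a - two * a = - a.
Proof. by move=> ->; ring. Qed.
Lemma rF (F : fieldType) (x a f c : F) : x + a / f * c = x + a * c / f.
Proof. by ring. Qed.

Definition swap (F : Type) (s : st F) :=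
  let: mkst a1 a2 f1 f2 t1 t2 ci cj ak fk := s in mkst a2 a1 f2 f1 t2 t1 cj ci ak fk.

Lemma rhoj_swap (F : fieldType) (aji cjk uji ujk : F) a s :
  rhoj aji cjk uji ujk a s = swap (rhoi aji cjk uji ujk a (swap s)).
Proof. by case: s. Qed.

Definition red n (A : 'M[int]_n) (i j k : 'I_n) (Y : 'I_(n+n+n) -> FF n) : st (FF n) :=
  mkst (Y (valpha i)) (Y (valpha j)) (Y (vf i)) (Y (vf j)) (Y (vtau i)) (Y (vtau j))
   (\prod_(l < n | (l != i) && (l != j)) Y (vtau l) ^+ `|A l i|%N)
   (\prod_(l < n | (l != j) && (l != i)) Y (vtau l) ^+ `|A l j|%N)
   (Y (valpha k)) (Y (vf k)).

Section S.
Variable n : nat.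
Local Notation FFn := (FF n).
Local Notation Pn := (P n).
Variables (A : 'M[int]_n) (U : 'M[CC]_n).
Hypothesis hAii : forall i, A i i = 2.
Hypothesis hAle : forall i k, k != i -> A k i <= 0.
Hypothesis hUii : forall i, U i i = 0.
Local Notation X := (@Xg n).
Local Notation s := (s_act A U).

Lemma Aii2' i : (A i i)%:~R = 2 :> FFn.
Proof. by rewrite hAii. Qed.

Lemma invol i x : s i (s i x) = x.
Proof.
have hs := fmor_si hAii hAle hUii i.
apply: (fmor_idE (fmor_comp hs hs)) => v /=.
rewrite s_act_X // gimg_mor //.
have -> : (s i \o X) = gimg A U i X by apply: functional_extensionality => w /=; rewrite s_act_X.
elim/var_ind: v => j.
- rewrite !gimg_a. exact: (@gA (FF n) _ _ _ _ (Aii2' i)).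
- rewrite !gimg_f gimg_a hUii cst0 mulr0 addr0.
  exact: (@gI1 (FF n) _ _ _ _ _ (Aii2' i)).
- rewrite [LHS]gimg_t; case: eqP => [->|hji]; last by rewrite gimg_t; case: eqP.
  rewrite gimg_f hUii cst0 mulr0 addr0.
  rewrite !(prod_split _ (hAii i) (fun k => @hAle i k)).
  rewrite (eq_bigr (fun k => X (vtau k) ^+ `|A k i|%N)) => [|k hk]; last by rewrite gimg_t (negbTE hk).
  rewrite gimg_t eqxx (prod_split (fun k => X (vtau k)) (hAii i) (fun k => @hAle i k)).
  exact: (@gI2 (FF n) (X (vf i)) (X (vtau i)) _ (Xg_neq0 _) (Xg_neq0 _) (Nt_neq0 A i)).
Qed.
End S.

Section S.
Variable n : nat.
Local Notation FFn := (FF n).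
Local Notation Pn := (P n).
Variables (A : 'M[int]_n) (U : 'M[CC]_n).
Hypothesis hAii : forall i, A i i = 2.
Hypothesis hAle : forall i k, k != i -> A k i <= 0.
Hypothesis hUii : forall i, U i i = 0.
Local Notation X := (@Xg n).
Local Notation s := (s_act A U).

Lemma red_gimg i j k Y : i != j ->
  red A i j k (gimg A U i Y) =
  rhoi (A i j)%:~R (A i k)%:~R (cst n (U i j)) (cst n (U i k)) `|A j i|%N (red A i j k Y).
Proof.
move=> hij; rewrite /red /rhoi; congr mkst.
- by rewrite gimg_a (rA _ (Aii2' hAii i)).
- by rewrite gimg_a.
- by rewrite gimg_f hUii cst0 mulr0 addr0.
- by rewrite gimg_f rF.
- rewrite gimg_t eqxx (prod_split (fun k => Y (vtau k)) (hAii i) (fun k => @hAle i k)).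
  by rewrite (bigD1 j) //= eq_sym.
- by rewrite gimg_t eq_sym (negbTE hij).
- by apply: eq_bigr => l /andP [hl _]; rewrite gimg_t (negbTE hl).
- by apply: eq_bigr => l /andP [_ hl]; rewrite gimg_t (negbTE hl).
- by rewrite gimg_a.
- by rewrite gimg_f rF.
Qed.

Lemma red_gimg_j i j k Y : i != j ->
  red A i j k (gimg A U j Y) =
  rhoj (A j i)%:~R (A j k)%:~R (cst n (U j i)) (cst n (U j k)) `|A i j|%N (red A i j k Y).
Proof.
move=> hij; rewrite rhoj_swap.
have -> : red A i j k (gimg A U j Y) = swap (red A j i k (gimg A U j Y)) by [].
by rewrite red_gimg 1?eq_sym.
Qed.

Lemma nz_red i j k sg : fmor sg -> nzs (red A i j k (sg \o X)).
Proof.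
case=> sD sM s1 sC.
have h v : sg (X v) != 0 by apply: (fm_neq0 sM s1); exact: Xg_neq0.
rewrite /nzs /=; do ! split => //; apply/prodf_neq0 => l _; exact: expf_neq0.
Qed.

Variables (i j : 'I_n).
Hypothesis hij : i != j.

Definition T := fun y => s i (s j y).
Definition Yn N := fun v => iter N T (X v).

Lemma fmor_T : fmor T.
Proof. exact: (fmor_comp (fmor_si hAii hAle hUii i) (fmor_si hAii hAle hUii j)). Qed.

Lemma fmor_TN N : fmor (iter N T).
Proof. exact: (fmor_iter N fmor_T). Qed.

Lemma sX i0 : (s i0 \o X) = gimg A U i0 X.
Proof. by apply: functional_extensionality => w /=; rewrite s_act_X. Qed.

Lemma Ystep N : Yn N.+1 = gimg A U j (gimg A U i (Yn N)).
Proof.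
apply: functional_extensionality => v; rewrite /Yn iterSr /T s_act_X //.
rewrite gimg_mor; last exact: fmor_si.
rewrite sX gimg_mor; last exact: fmor_TN.
congr gimg; apply: functional_extensionality => w /=.
by rewrite gimg_mor //; exact: fmor_TN.
Qed.

Definition Pst k := fun st0 =>
  rhoj (A j i)%:~R (A j k)%:~R (cst n (U j i)) (cst n (U j k)) `|A i j|%N
   (rhoi (A i j)%:~R (A i k)%:~R (cst n (U i j)) (cst n (U i k)) `|A j i|%N st0).

Lemma red_iter k N : red A i j k (Yn N) = iter N (Pst k) (red A i j k X).
Proof.
elim: N => [|N ih] //.
by rewrite Ystep red_gimg_j // red_gimg // ih.
Qed.

Lemma nz_hyp k N : nzs (iter N (Pst k) (red A i j k X)) /\
  nzs (rhoi (A i j)%:~R (A i k)%:~R (cst n (U i j)) (cst n (U i k)) `|A j i|%N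
    (iter N (Pst k) (red A i j k X))).
Proof.
rewrite -red_iter -red_gimg //; split; first exact: (nz_red _ _ _ (fmor_TN N)).
have -> : gimg A U i (Yn N) = (iter N T \o s i) \o X.
  apply: functional_extensionality => v /=.
  rewrite s_act_X // gimg_mor //; exact: fmor_TN.
exact: (nz_red _ _ _ (fmor_comp (fmor_TN N) (fmor_si hAii hAle hUii i))).
Qed.

Lemma Y_tau_other l N : l != i -> l != j -> Yn N (vtau l) = X (vtau l).
Proof.
move=> hi hj; elim: N => [|N ih] //.
by rewrite Ystep gimg_t (negbTE hj) gimg_t (negbTE hi).
Qed.

Lemma braid_from m : (forall k, iter m (Pst k) (red A i j k X) = red A i j k X) ->
  forall x, iter m T x = x.
Proof.
move=> H; apply: fmor_idE; first exact: fmor_TN.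
have e k : red A i j k (Yn m) = red A i j k X by rewrite red_iter H.
elim/var_ind => l.
- by have := congr1 (@sak _) (e l).
- by have := congr1 (@sfk _) (e l).
- have [->|hi] := eqVneq l i; first by have := congr1 (@st1 _) (e i).
  have [->|hj] := eqVneq l j; first by have := congr1 (@st2 _) (e i).
  exact: Y_tau_other.
Qed.
End S.

Unset Implicit Arguments.
Set Strict Implicit.

Lemma int_p2 (a b : int) : a <= 0 -> b <= 0 -> a * b = 2 -> (a = -2 /\ b = -1) \/ (a = -1 /\ b = -2).
Proof.
move=> ha hb h.
have h1 : a <= -1 by nia.
have h2 : b <= -1 by nia.
have h3 : -2 <= a by nia.
have h4 : -2 <= b by nia.
nia.
Qed.
Lemma int_p3 (a b : int) : a <= 0 -> b <= 0 -> a * b = 3 -> (a = -3 /\ b = -1) \/ (a = -1 /\ b = -3).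
Proof.
move=> ha hb h.
have h1 : a <= -1 by nia.
have h2 : b <= -1 by nia.
have h3 : -3 <= a by nia.
have h4 : -3 <= b by nia.
nia.
Qed.
Lemma int_p1 (a b : int) : a <= 0 -> b <= 0 -> a * b = 1 -> (a = -1 /\ b = -1).
Proof.
move=> ha hb h.
have h1 : a <= -1 by nia.
have h2 : b <= -1 by nia.
have h3 : -1 <= a by nia.
have h4 : -1 <= b by nia.
nia.
Qed.

Lemma cstM n (x y : CC) : cst n (x * y) = cst n x * cst n y.
Proof. exact: (rmorphM (cstr n)). Qed.
Lemma cstz n (z : int) : cst n z%:~R = z%:~R.
Proof. exact: (rmorph_int (cstr n)). Qed.

Lemma cst_rel n (u v : CC) (k : nat) : u = - (k%:Z)%:~R * v -> cst n u = - k%:R * cst n v.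
Proof.
move=> ->; change (cstr n (- (k%:Z)%:~R * v) = - k%:R * cstr n v).
by rewrite rmorphM rmorphN rmorph_int.
Qed.

Theorem theorem2 (n : nat) (A : 'M[int]_n) (U : 'M[CC]_n) :
  is_GCM A ->
  (forall j, U j j = 0) ->
  (forall i j, A i j = 0 -> A j i = 0 -> U i j = 0 /\ U j i = 0) ->
  (forall (i j : 'I_n) (k : int), k \in [:: 1; 2; 3] ->
      A i j = - k -> A j i = -1 -> U i j = - k%:~R * U j i) ->
  (* each s_i is a C-automorphism of C(alpha; f; tau) (C-linear ring morphism) *)
  (forall i, (forall c : CC, s_act A U i (cst n c) = cst n c) /\
             s_act A U i 1 = 1 /\
             (forall x y, s_act A U i (x + y) = s_act A U i x + s_act A U i y) /\
             (forall x y, s_act A U i (x * y) = s_act A U i x * s_act A U i y)) /\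
  (* Coxeter relations *)
  (forall i (x : FF n), s_act A U i (s_act A U i x) = x) /\
  (forall i j, i != j -> forall m : nat, cox_m (A i j * A j i) = Some m ->
     forall x : FF n, iter m (fun y => s_act A U i (s_act A U j y)) x = x).
Proof.
move=> [hAii [hAoff hAz]] hUii hU1 hU2.
have hAle : forall i k, k != i -> A k i <= 0 by move=> i k hk; exact: hAoff.
split.
  move=> i; have [sD sM s1 sC] := fmor_si hAii hAle hUii i; by split.
split; first by move=> i x; exact: invol.
move=> i j hij m hm.
have hji : j != i by rewrite eq_sym.
apply: (braid_from hAii hAle hUii hij) => k.
set s0 := red A i j k (@Xg n).
have H := nz_hyp hAii hAle hUii hij k.
have ha := hAle j i hij; have hb := hAle i j hji.
move: hm; rewrite /cox_m.
case: ifP => [/eqP h0 [<-]|_].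
  have [ea eb] : A i j = 0 /\ A j i = 0.
    move/eqP: h0; rewrite mulf_eq0 => /orP [/eqP e|/eqP e].
      by split => //; apply/hAz.
    by split => //; apply/hAz.
  have [u1 u2] := hU1 i j ea eb.
  have hna : `|A i j|%N = 0%N by rewrite ea.
  have hnb : `|A j i|%N = 0%N by rewrite eb.
  have haij : (A i j)%:~R = - 0%:R :> FF n by rewrite ea oppr0.
  have haji : (A j i)%:~R = - 0%:R :> FF n by rewrite eb oppr0.
  have huij : cst n (U i j) = 0 by rewrite u1 cst0.
  have huji : cst n (U j i) = 0 by rewrite u2 cst0.
  exact: (@case_00 (FF n) 0 (A i j)%:~R (A j i)%:~R (cst n (U i j)) (cst n (U j i))
    (A i k)%:~R (A j k)%:~R (cst n (U i k)) (cst n (U j k))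
    (sa1 s0) (sa2 s0) (sf1 s0) (sf2 s0) (st1 s0) (st2 s0) (sci s0) (scj s0) (sak s0) (sfk s0)
    `|A i j|%N `|A j i|%N hna hnb haij haji huij huji (fun N _ => H N)).
case: ifP => [/eqP h1 [<-]|_].
  have [ea eb] := int_p1 _ _ ha hb h1.
  have hna : `|A i j|%N = 1%N by rewrite ea.
  have hnb : `|A j i|%N = 1%N by rewrite eb.
  have haij : (A i j)%:~R = - 1%:R :> FF n by rewrite ea.
  have haji : (A j i)%:~R = - 1%:R :> FF n by rewrite eb.
  have huij : cst n (U i j) = - 1%:R * cst n (U j i) by apply: cst_rel; apply: (hU2 i j 1%:Z) => //; rewrite ?ea ?eb.
  have huji : cst n (U j i) = cst n (U j i) by [].
  exact: (@case_11 (FF n) (cst n (U j i)) (A i j)%:~R (A j i)%:~R (cst n (U i j)) (cst n (U j i))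
    (A i k)%:~R (A j k)%:~R (cst n (U i k)) (cst n (U j k))
    (sa1 s0) (sa2 s0) (sf1 s0) (sf2 s0) (st1 s0) (st2 s0) (sci s0) (scj s0) (sak s0) (sfk s0)
    `|A i j|%N `|A j i|%N hna hnb haij haji huij huji (fun N _ => H N)).
case: ifP => [/eqP h2 [<-]|_].
  have [[ea eb]|[ea eb]] := int_p2 _ _ ha hb h2.
    have hna : `|A i j|%N = 2%N by rewrite ea.
    have hnb : `|A j i|%N = 1%N by rewrite eb.
    have haij : (A i j)%:~R = - 2%:R :> FF n by rewrite ea.
    have haji : (A j i)%:~R = - 1%:R :> FF n by rewrite eb.
    have huij : cst n (U i j) = - 2%:R * cst n (U j i) by apply: cst_rel; apply: (hU2 i j 2%:Z) => //; rewrite ?ea ?eb.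
    have huji : cst n (U j i) = cst n (U j i) by [].
    exact: (@case_21 (FF n) (cst n (U j i)) (A i j)%:~R (A j i)%:~R (cst n (U i j)) (cst n (U j i))
      (A i k)%:~R (A j k)%:~R (cst n (U i k)) (cst n (U j k))
      (sa1 s0) (sa2 s0) (sf1 s0) (sf2 s0) (st1 s0) (st2 s0) (sci s0) (scj s0) (sak s0) (sfk s0)
      `|A i j|%N `|A j i|%N hna hnb haij haji huij huji (fun N _ => H N)).
    have hna : `|A i j|%N = 1%N by rewrite ea.
    have hnb : `|A j i|%N = 2%N by rewrite eb.
    have haij : (A i j)%:~R = - 1%:R :> FF n by rewrite ea.
    have haji : (A j i)%:~R = - 2%:R :> FF n by rewrite eb.
    have huij : cst n (U i j) = cst n (U i j) by [].
    have huji : cst n (U j i) = - 2%:R * cst n (U i j) by apply: cst_rel; apply: (hU2 j i 2%:Z) => //; rewrite ?ea ?eb.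
    exact: (@case_12 (FF n) (cst n (U i j)) (A i j)%:~R (A j i)%:~R (cst n (U i j)) (cst n (U j i))
      (A i k)%:~R (A j k)%:~R (cst n (U i k)) (cst n (U j k))
      (sa1 s0) (sa2 s0) (sf1 s0) (sf2 s0) (st1 s0) (st2 s0) (sci s0) (scj s0) (sak s0) (sfk s0)
      `|A i j|%N `|A j i|%N hna hnb haij haji huij huji (fun N _ => H N)).
case: ifP => [/eqP h3 [<-]|_].
  have [[ea eb]|[ea eb]] := int_p3 _ _ ha hb h3.
    have hna : `|A i j|%N = 3%N by rewrite ea.
    have hnb : `|A j i|%N = 1%N by rewrite eb.
    have haij : (A i j)%:~R = - 3%:R :> FF n by rewrite ea.
    have haji : (A j i)%:~R = - 1%:R :> FF n by rewrite eb.
    have huij : cst n (U i j) = - 3%:R * cst n (U j i) by apply: cst_rel; apply: (hU2 i j 3%:Z) => //; rewrite ?ea ?eb.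
    have huji : cst n (U j i) = cst n (U j i) by [].
    exact: (@case_31 (FF n) (cst n (U j i)) (A i j)%:~R (A j i)%:~R (cst n (U i j)) (cst n (U j i))
      (A i k)%:~R (A j k)%:~R (cst n (U i k)) (cst n (U j k))
      (sa1 s0) (sa2 s0) (sf1 s0) (sf2 s0) (st1 s0) (st2 s0) (sci s0) (scj s0) (sak s0) (sfk s0)
      `|A i j|%N `|A j i|%N hna hnb haij haji huij huji (fun N _ => H N)).
    have hna : `|A i j|%N = 1%N by rewrite ea.
    have hnb : `|A j i|%N = 3%N by rewrite eb.
    have haij : (A i j)%:~R = - 1%:R :> FF n by rewrite ea.
    have haji : (A j i)%:~R = - 3%:R :> FF n by rewrite eb.
    have huij : cst n (U i j) = cst n (U i j) by [].
    have huji : cst n (U j i) = - 3%:R * cst n (U i j) by apply: cst_rel; apply: (hU2 j i 3%:Z) => //; rewrite ?ea ?eb.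
    exact: (@case_13 (FF n) (cst n (U i j)) (A i j)%:~R (A j i)%:~R (cst n (U i j)) (cst n (U j i))
      (A i k)%:~R (A j k)%:~R (cst n (U i k)) (cst n (U j k))
      (sa1 s0) (sa2 s0) (sf1 s0) (sf2 s0) (st1 s0) (st2 s0) (sci s0) (scj s0) (sak s0) (sfk s0)
      `|A i j|%N `|A j i|%N hna hnb haij haji huij huji (fun N _ => H N)).
by [].
Qed.
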